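(* Let $\lambda_v>0$, $r_v>0$, $\rho_v=\lambda_v/r_v$ for $v\in V$, and assume $\sum_{v'\in\bar{\mathcal A}(v)}\rho_{v'}<1$ for all $v\in V$. Under the proportional fair allocation, $N(t)$ is a reversible, positive recurrent Markov process with stationary distribution $$\pi(n)=\frac{1}{c(\rho)}\prod_{v\in V}\rho_v^{n_v}\binom{\sum_{v'\in\bar{\mathcal D}(v)}n_{v'}}{n_v},\qquad n\in\mathbb N^{V},$$ where $$c(\rho)=\prod_{v\in V}\frac{1-\sum_{v'\in\mathcal A(v)}\rho_{v'}}{1-\sum_{v'\in\bar{\mathcal A}(v)}\rho_{v'}}.$$ Moreover, in stationarity, for every $v\in V$, $$\mathbb E[N_v(t)]=\rho_v\sum_{v'\in\bar{\mathcal D}(v)}\frac{1-d(v')}{1-\sum_{v''\in\bar{\mathcal A}(v')}\rho_{v''}},\qquad \psi_v=\frac{\lambda_v}{\mathbb E[N_v(t)]}=r_v\Big[\sum_{v'\in\bar{\mathcal D}(v)}\frac{1-d(v')}{1-\sum_{v''\in\bar{\mathcal A}(v')}\rho_{v''}}\Big]^{-1}.$$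
   Context: $G=(V,E)$ is a finite directed rooted tree with vertex set $V=\{1,\dots,|V|\}$ and root $1$, edges oriented from parent to child. For $v\in V$: $\mathcal A(v)$ is the set of strict ancestors of $v$, $\bar{\mathcal A}(v)=\mathcal A(v)\cup\{v\}$, $\mathcal D(v)$ is the set of strict descendants of $v$, $\bar{\mathcal D}(v)=\mathcal D(v)\cup\{v\}$, and $d(v)$ is the number of children of $v$. $N(t)\in\mathbb N^V$ is the continuous-time Markov chain with transition rates $n\to n+e^v$ at rate $\lambda_v$ and $n\to n-e^v$ at rate $r_v\gamma_v(n)\mathbf 1\{n_v\ge1\}$ ($e^v$ the $v$-th canonical basis vector). The proportional fair allocation is $\gamma_v(n)=\frac{n_v}{\sum_{v'\in\bar{\mathcal D}(v)}n_{v'}}\prod_{a\in\mathcal A(v)}\frac{\sum_{v'\in\mathcal D(a)}n_{v'}}{\sum_{v'\in\bar{\mathcal D}(a)}n_{v'}}$ when $n_v\ge1$ (all denominators are then positive) and $\gamma_v(n)=0$ when $n_v=0$. $\psi_v=\lambda_v/\mathbb E[N_v(t)]$ is the flow throughput of beam $v$. *)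

(* Defs.v *)
(* classical reals.  Vertices are 0,...,K-1 with root 0
   (the paper's vertex i corresponds to i-1 here); the tree is given by a
   parent function [par] (the value [par 0] is irrelevant). *)
From Stdlib Require Import Reals List Arith Bool Relations.
Import ListNotations.
Open Scope R_scope.

Definition vsum (K : nat) (f : nat -> R) : R :=
  fold_right (fun v acc => f v + acc) 0 (seq 0 K).
Definition vprod (K : nat) (f : nat -> R) : R :=
  fold_right (fun v acc => f v * acc) 1 (seq 0 K).
Definition vsumn (K : nat) (f : nat -> nat) : nat :=
  fold_right (fun v acc => (f v + acc)%nat) 0%nat (seq 0 K).

Definition is_tree (K : nat) (par : nat -> nat) : Prop :=
  (1 <= K)%nat /\
  (forall v, (0 < v < K)%nat -> (par v < K)%nat) /\
  (forall v, (v < K)%nat -> exists k, Nat.iter k par v = 0%nat).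

(* a is a strict ancestor of v: a = par^k(v) for some k >= 1 such that
   the path v, par v, ..., par^(k-1) v does not pass through the root.
   (For a tree with K vertices, depth < K, so k ranges over 1..K.) *)
Definition is_anc (K : nat) (par : nat -> nat) (a v : nat) : bool :=
  existsb (fun k => Nat.eqb (Nat.iter k par v) a &&
                    forallb (fun j => negb (Nat.eqb (Nat.iter j par v) 0))
                            (seq 0 k))
          (seq 1 K).

Definition is_anc_eq (K : nat) (par : nat -> nat) (a v : nat) : bool :=
  Nat.eqb a v || is_anc K par a v.

Definition nchildren (K : nat) (par : nat -> nat) (v : nat) : nat :=
  length (filter (fun c => negb (Nat.eqb c 0) && Nat.eqb (par c) v) (seq 0 K)).

(* states: n : nat -> nat, supported on V *)
Definition valid (K : nat) (n : nat -> nat) : Prop :=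
  forall u, (K <= u)%nat -> n u = 0%nat.

Definition subtot (K : nat) (par : nat -> nat) (n : nat -> nat) (u : nat) : nat :=
  vsumn K (fun d => if is_anc_eq K par u d then n d else 0%nat).

Definition gamma (K : nat) (par : nat -> nat) (n : nat -> nat) (v : nat) : R :=
  if Nat.eqb (n v) 0 then 0
  else INR (n v) / INR (subtot K par n v) *
       vprod K (fun a => if is_anc K par a v
                         then INR (subtot K par n a - n a) / INR (subtot K par n a)
                         else 1).

Definition incr (n : nat -> nat) (v : nat) : nat -> nat :=
  fun u => if Nat.eqb u v then (n u + 1)%nat else n u.
Definition decr (n : nat -> nat) (v : nat) : nat -> nat :=
  fun u => if Nat.eqb u v then (n u - 1)%nat else n u.

Definition state_eqb (K : nat) (n m : nat -> nat) : bool :=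
  forallb (fun u => Nat.eqb (n u) (m u)) (seq 0 K).

Definition rate (K : nat) (par : nat -> nat) (lam r : nat -> R)
    (n m : nat -> nat) : R :=
  vsum K (fun v =>
    (if state_eqb K m (incr n v) then lam v else 0) +
    (if negb (Nat.eqb (n v) 0) && state_eqb K m (decr n v)
     then r v * gamma K par n v else 0)).

Definition out_rate (K : nat) (par : nat -> nat) (lam r : nat -> R)
    (n : nat -> nat) : R :=
  vsum K (fun v => lam v + r v * gamma K par n v).

Definition stationary (K : nat) (par : nat -> nat) (lam r : nat -> R)
    (p : (nat -> nat) -> R) : Prop :=
  forall m, valid K m ->
    p m * out_rate K par lam r m =
    vsum K (fun v =>
      (if Nat.eqb (m v) 0 then 0
       else p (decr m v) * rate K par lam r (decr m v) m) +
      p (incr m v) * rate K par lam r (incr m v) m).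

Definition reversible (K : nat) (par : nat -> nat) (lam r : nat -> R)
    (p : (nat -> nat) -> R) : Prop :=
  forall n m, valid K n -> valid K m ->
    p n * rate K par lam r n m = p m * rate K par lam r m n.

Definition step (K : nat) (par : nat -> nat) (lam r : nat -> R)
    (n m : nat -> nat) : Prop :=
  valid K n /\ valid K m /\ rate K par lam r n m > 0.
Definition irreducible (K : nat) (par : nat -> nat) (lam r : nat -> R) : Prop :=
  forall n m, valid K n -> valid K m ->
    clos_refl_trans _ (step K par lam r) n m.

(* Box partial sums over N^V: sum of f(n) over n with n_u <= M for u < d,
   n_u = 0 for u >= d. *)
Definition upd (n : nat -> nat) (d j : nat) : nat -> nat :=
  fun u => if Nat.eqb u d then j else n u.
Fixpoint bsum (d M : nat) (f : (nat -> nat) -> R) : R :=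
  match d with
  | O => f (fun _ => 0%nat)
  | S d' => fold_right (fun j acc => bsum d' M (fun n => f (upd n d' j)) + acc)
                       0 (seq 0 (S M))
  end.

(* sum over N^V of a nonnegative family f equals L *)
Definition state_sum (K : nat) (f : (nat -> nat) -> R) (L : R) : Prop :=
  Un_cv (fun M => bsum K M f) L.

Definition sumA (K : nat) (par : nat -> nat) (rho : nat -> R) (v : nat) : R :=
  vsum K (fun a => if is_anc K par a v then rho a else 0).
Definition sumAbar (K : nat) (par : nat -> nat) (rho : nat -> R) (v : nat) : R :=
  vsum K (fun a => if is_anc_eq K par a v then rho a else 0).

Definition c_rho (K : nat) (par : nat -> nat) (rho : nat -> R) : R :=
  vprod K (fun v => (1 - sumA K par rho v) / (1 - sumAbar K par rho v)).

Definition pi_pf (K : nat) (par : nat -> nat) (rho : nat -> R)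
    (n : nat -> nat) : R :=
  / c_rho K par rho *
  vprod K (fun v => rho v ^ (n v) * C (subtot K par n v) (n v)).

Definition Ssub (K : nat) (par : nat -> nat) (rho : nat -> R) (v : nat) : R :=
  vsum K (fun w => if is_anc_eq K par v w
                   then (1 - INR (nchildren K par w)) / (1 - sumAbar K par rho w)
                   else 0).

(* Main.v *)
Require Import Defs.
From Stdlib Require Import Reals Lra Lia List Permutation Arith Bool FunctionalExtensionality Relations Classical Sorting.Sorted.
Import ListNotations.
Open Scope R_scope.


Open Scope R_scope.

Definition lsum (l : list nat) (f : nat -> R) : R :=
  fold_right (fun v acc => f v + acc) 0 l.
Definition lprod (l : list nat) (f : nat -> R) : R :=
  fold_right (fun v acc => f v * acc) 1 l.
Definition lsumn (l : list nat) (f : nat -> nat) : nat :=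
  fold_right (fun v acc => (f v + acc)%nat) 0%nat l.

Lemma vsum_lsum K f : vsum K f = lsum (seq 0 K) f. Proof. reflexivity. Qed.
Lemma vprod_lprod K f : vprod K f = lprod (seq 0 K) f. Proof. reflexivity. Qed.
Lemma vsumn_lsumn K f : vsumn K f = lsumn (seq 0 K) f. Proof. reflexivity. Qed.

Lemma lsum_ext l f g : (forall x, In x l -> f x = g x) -> lsum l f = lsum l g.
Proof. induction l; simpl; intros H; [reflexivity|]. f_equal; auto. Qed.
Lemma lprod_ext l f g : (forall x, In x l -> f x = g x) -> lprod l f = lprod l g.
Proof. induction l; simpl; intros H; [reflexivity|]. f_equal; auto. Qed.
Lemma lsumn_ext l f g : (forall x, In x l -> f x = g x) -> lsumn l f = lsumn l g.
Proof. induction l; simpl; intros H; [reflexivity|]. f_equal; auto. Qed.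

Lemma lsum_plus l f g : lsum l (fun x => f x + g x) = lsum l f + lsum l g.
Proof. induction l; simpl; try rewrite IHl; lra. Qed.
Lemma lsum_scal l c f : lsum l (fun x => c * f x) = c * lsum l f.
Proof. induction l; simpl; try rewrite IHl; lra. Qed.
Lemma lsum_zero l : lsum l (fun _ => 0) = 0.
Proof. induction l; simpl; try rewrite IHl; lra. Qed.
Lemma lsum_opp l f : lsum l (fun x => - f x) = - lsum l f.
Proof. induction l; simpl; try rewrite IHl; lra. Qed.
Lemma lsum_minus l f g : lsum l (fun x => f x - g x) = lsum l f - lsum l g.
Proof. induction l; simpl; try rewrite IHl; lra. Qed.
Lemma lsum_app l1 l2 f : lsum (l1 ++ l2) f = lsum l1 f + lsum l2 f.
Proof. induction l1; simpl; try rewrite IHl1; lra. Qed.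
Lemma lprod_mult l f g : lprod l (fun x => f x * g x) = lprod l f * lprod l g.
Proof. induction l; simpl; try rewrite IHl; ring. Qed.
Lemma lprod_one l : lprod l (fun _ => 1) = 1.
Proof. induction l; simpl; try rewrite IHl; ring. Qed.
Lemma lprod_app l1 l2 f : lprod (l1 ++ l2) f = lprod l1 f * lprod l2 f.
Proof. induction l1; simpl; try rewrite IHl1; ring. Qed.
Lemma lsumn_app l1 l2 f : lsumn (l1 ++ l2) f = (lsumn l1 f + lsumn l2 f)%nat.
Proof. induction l1; simpl; try rewrite IHl1; lia. Qed.

Lemma lsum_nonneg l f : (forall x, In x l -> 0 <= f x) -> 0 <= lsum l f.
Proof. induction l; simpl; intros H; [lra|]. pose proof (H a (or_introl eq_refl)).
  assert (0 <= lsum l f) by (apply IHl; auto). lra. Qed.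
Lemma lsum_le l f g : (forall x, In x l -> f x <= g x) -> lsum l f <= lsum l g.
Proof. induction l; simpl; intros H; [lra|]. pose proof (H a (or_introl eq_refl)).
  assert (lsum l f <= lsum l g) by (apply IHl; auto). lra. Qed.
Lemma lprod_pos l f : (forall x, In x l -> 0 < f x) -> 0 < lprod l f.
Proof. induction l; simpl; intros H; [lra|]. apply Rmult_lt_0_compat; auto. Qed.
Lemma lprod_nonneg l f : (forall x, In x l -> 0 <= f x) -> 0 <= lprod l f.
Proof. induction l; simpl; intros H; [lra|]. apply Rmult_le_pos; auto. Qed.

Lemma lprod_pow l (x : R) g : lprod l (fun v => x ^ g v) = x ^ lsumn l g.
Proof. induction l; simpl; auto. rewrite IHl, pow_add. ring. Qed.

Lemma lsum_swap l1 l2 (f : nat -> nat -> R) :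
  lsum l1 (fun i => lsum l2 (fun j => f i j)) = lsum l2 (fun j => lsum l1 (fun i => f i j)).
Proof. induction l1; simpl. - rewrite lsum_zero; auto.
  - rewrite IHl1, <- lsum_plus. reflexivity. Qed.

Lemma lsum_single l w a : NoDup l -> In w l ->
  lsum l (fun v => if Nat.eqb v w then a else 0) = a.
Proof. induction l; simpl; intros Hn Hi; [contradiction|]. inversion Hn; subst.
  destruct (Nat.eqb_spec a0 w).
  - subst. rewrite (lsum_ext _ _ (fun _ => 0)). rewrite lsum_zero; lra.
    intros x Hx. destruct (Nat.eqb_spec x w); subst; auto; contradiction.
  - destruct Hi as [Hi|Hi]; [congruence|]. rewrite IHl; auto; lra. Qed.

Lemma lprod_single l w a : NoDup l -> In w l ->
  lprod l (fun v => if Nat.eqb v w then a else 1) = a.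
Proof. induction l; simpl; intros Hn Hi; [contradiction|]. inversion Hn; subst.
  destruct (Nat.eqb_spec a0 w).
  - subst. rewrite (lprod_ext _ _ (fun _ => 1)). rewrite lprod_one; lra.
    intros x Hx. destruct (Nat.eqb_spec x w); subst; auto; contradiction.
  - destruct Hi as [Hi|Hi]; [congruence|]. rewrite IHl; auto; lra. Qed.

Definition psum (M : nat) (g : nat -> R) : R := lsum (seq 0 (S M)) g.

Lemma psum_S M g : psum (S M) g = psum M g + g (S M).
Proof. unfold psum. rewrite seq_S, lsum_app. simpl. lra. Qed.

Lemma psum_mono M M' g : (forall j, 0 <= g j) -> (M <= M')%nat -> psum M g <= psum M' g.
Proof. intros Hg H. induction H; [lra|]. rewrite psum_S. specialize (Hg (S m)). lra. Qed.

Lemma psum_nonneg M g : (forall j, 0 <= g j) -> 0 <= psum M g.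
Proof. intros. apply lsum_nonneg; auto. Qed.

Fixpoint isum (l : list nat) (M : nat) (f : (nat -> nat) -> R) : R :=
  match l with
  | [] => f (fun _ => 0%nat)
  | a :: l' => psum M (fun j => isum l' M (fun n => f (upd n a j)))
  end.

Lemma isum_ext l M f g : (forall n, f n = g n) -> isum l M f = isum l M g.
Proof. intros H. replace g with f; auto. apply functional_extensionality; auto. Qed.

Lemma bsum_isum d M f : bsum d M f = isum (rev (seq 0 d)) M f.
Proof. revert f. induction d; intros f; [reflexivity|].
  rewrite seq_S, rev_app_distr. cbn [rev app isum]. unfold psum, lsum.
  change (bsum (S d) M f) with (fold_right (fun j acc => bsum d M (fun n => f (upd n d j)) + acc) 0 (seq 0 (S M))).
  generalize (seq 0 (S M)). intros s. induction s as [|x s IHs]; simpl; auto. rewrite IHs, IHd. reflexivity. Qed.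

Lemma upd_comm n a b i j : a <> b -> upd (upd n b j) a i = upd (upd n a i) b j.
Proof. intros H. apply functional_extensionality. intros u. unfold upd.
  destruct (Nat.eqb_spec u a), (Nat.eqb_spec u b); subst; auto. congruence. Qed.

Lemma isum_perm l l' M f : NoDup l -> Permutation l l' -> isum l M f = isum l' M f.
Proof. intros Hn Hp. revert f. induction Hp; intros f; simpl; auto.
  - inversion Hn; subst. unfold psum. apply lsum_ext. intros. apply IHHp; auto.
  - inversion Hn; subst. assert (x <> y) by (intro; subst; simpl in *; tauto).
    unfold psum. rewrite lsum_swap. apply lsum_ext; intros j _. apply lsum_ext; intros i _.
    apply isum_ext. intros n. rewrite upd_comm; auto.
  - rewrite IHHp1 by auto. apply IHHp2. eapply Permutation_NoDup; eauto. Qed.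

Lemma isum_nonneg l M f : (forall n, 0 <= f n) -> 0 <= isum l M f.
Proof. revert f; induction l; intros f Hf; simpl; auto. apply psum_nonneg. intros; apply IHl; auto. Qed.

Lemma isum_mono l M M' f : (forall n, 0 <= f n) -> (M <= M')%nat -> isum l M f <= isum l M' f.
Proof. revert f; induction l; intros f Hf HM; simpl; [lra|].
  apply Rle_trans with (psum M (fun j => isum l M' (fun n => f (upd n a j)))).
  - unfold psum. apply lsum_le. intros; apply IHl; auto.
  - apply psum_mono; auto. intros; apply isum_nonneg; auto. Qed.

Lemma cv_le_lim u L : Un_growing u -> Un_cv u L -> forall n, u n <= L.
Proof. apply growing_ineq. Qed.

Lemma cv_nonneg u L : (forall n, 0 <= u n) -> Un_cv u L -> 0 <= L.
Proof. intros Hu Hc. destruct (Rle_lt_dec 0 L); auto.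
  destruct (Hc (-L)) as [N HN]; [lra|]. specialize (HN N (le_n _)). specialize (Hu N).
  unfold R_dist in HN. rewrite Rabs_right in HN by lra. lra. Qed.

Lemma psum_cv_fin J (a : nat -> nat -> R) (g : nat -> R) :
  (forall j, Un_cv (fun M => a j M) (g j)) -> Un_cv (fun M => psum J (fun j => a j M)) (psum J g).
Proof. induction J; intros H.
  - unfold psum; simpl. eapply Un_cv_ext. 2: { rewrite Rplus_0_r. apply H. }
    simpl. intros; lra.
  - eapply Un_cv_ext. { intros M. symmetry. apply (psum_S J (fun j => a j M)). }
    rewrite psum_S. apply CV_plus; auto. Qed.

Lemma tonelli a l f (g : nat -> R) L :
  (forall n, 0 <= f n) ->
  (forall j, Un_cv (fun M => isum l M (fun n => f (upd n a j))) (g j)) ->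
  Un_cv (fun M => psum M g) L ->
  Un_cv (fun M => isum (a :: l) M f) L.
Proof. intros Hf Hg HL. simpl.
  assert (Hgr : forall j, Un_growing (fun M => isum l M (fun n => f (upd n a j)))).
  { intros j M. apply isum_mono; auto. }
  assert (Hg0 : forall j, 0 <= g j).
  { intros j. eapply cv_nonneg; [|apply Hg]. intros; apply isum_nonneg; auto. }
  assert (HLb : forall M, psum M g <= L).
  { apply cv_le_lim; auto. intros M. rewrite psum_S. specialize (Hg0 (S M)); lra. }
  intros eps Heps.
  destruct (HL (eps/2)) as [J HJ]; [lra|]. specialize (HJ J (le_n _)).
  destruct (psum_cv_fin J (fun j M => isum l M (fun n => f (upd n a j))) g Hg (eps/2)) as [M0 HM0]; [lra|].
  exists (Nat.max M0 J). intros M HM.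
  specialize (HM0 M ltac:(lia)).
  unfold R_dist in *.
  assert (Hup : psum M (fun j => isum l M (fun n => f (upd n a j))) <= L).
  { eapply Rle_trans; [|apply (HLb M)]. unfold psum. apply lsum_le. intros j _.
    apply (cv_le_lim (fun M => isum l M (fun n => f (upd n a j)))); auto. }
  assert (Hlow : psum J (fun j => isum l M (fun n => f (upd n a j))) <=
                 psum M (fun j => isum l M (fun n => f (upd n a j)))).
  { apply psum_mono; [intros; apply isum_nonneg; auto| lia]. }
  pose proof (HLb J).
  apply Rabs_def1; apply Rabs_def2 in HJ; apply Rabs_def2 in HM0; lra. Qed.

Lemma series_term_0 (g : nat -> R) L : Un_cv (fun M => psum M g) L -> Un_cv g 0.
Proof. intros H eps He. destruct (H (eps/2)) as [N HN]; [lra|]. exists (S N). intros n Hn.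
  destruct n; [lia|]. pose proof (HN (S n) ltac:(lia)). pose proof (HN n ltac:(lia)).
  rewrite psum_S in H0. unfold R_dist in *. rewrite Rminus_0_r.
  apply Rabs_def2 in H0; apply Rabs_def2 in H1. apply Rabs_def1; lra. Qed.

Lemma in_seq0 K x : In x (seq 0 K) <-> (x < K)%nat.
Proof. rewrite in_seq. lia. Qed.

Lemma vsum_ext K f g : (forall x, (x < K)%nat -> f x = g x) -> vsum K f = vsum K g.
Proof. intros H. apply lsum_ext. intros x Hx. apply H. apply in_seq0; auto. Qed.
Lemma vprod_ext K f g : (forall x, (x < K)%nat -> f x = g x) -> vprod K f = vprod K g.
Proof. intros H. apply lprod_ext. intros x Hx. apply H. apply in_seq0; auto. Qed.
Lemma vsumn_ext K f g : (forall x, (x < K)%nat -> f x = g x) -> vsumn K f = vsumn K g.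
Proof. intros H. apply lsumn_ext. intros x Hx. apply H. apply in_seq0; auto. Qed.

Lemma vsum_plus K f g : vsum K (fun x => f x + g x) = vsum K f + vsum K g.
Proof. apply lsum_plus. Qed.
Lemma vsum_minus K f g : vsum K (fun x => f x - g x) = vsum K f - vsum K g.
Proof. apply lsum_minus. Qed.
Lemma vsum_scal K c f : vsum K (fun x => c * f x) = c * vsum K f.
Proof. apply lsum_scal. Qed.
Lemma vsum_zero K : vsum K (fun _ => 0) = 0.
Proof. apply lsum_zero. Qed.
Lemma vprod_mult K f g : vprod K (fun x => f x * g x) = vprod K f * vprod K g.
Proof. apply lprod_mult. Qed.
Lemma vprod_one K : vprod K (fun _ => 1) = 1.
Proof. apply lprod_one. Qed.
Lemma vprod_pow K (x : R) g : vprod K (fun v => x ^ g v) = x ^ vsumn K g.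
Proof. apply lprod_pow. Qed.
Lemma vsum_nonneg K f : (forall x, (x < K)%nat -> 0 <= f x) -> 0 <= vsum K f.
Proof. intros H. apply lsum_nonneg. intros x Hx. apply H, in_seq0; auto. Qed.
Lemma vsum_le K f g : (forall x, (x < K)%nat -> f x <= g x) -> vsum K f <= vsum K g.
Proof. intros H. apply lsum_le. intros x Hx. apply H, in_seq0; auto. Qed.
Lemma vprod_pos K f : (forall x, (x < K)%nat -> 0 < f x) -> 0 < vprod K f.
Proof. intros H. apply lprod_pos. intros x Hx. apply H, in_seq0; auto. Qed.
Lemma vprod_nonneg K f : (forall x, (x < K)%nat -> 0 <= f x) -> 0 <= vprod K f.
Proof. intros H. apply lprod_nonneg. intros x Hx. apply H, in_seq0; auto. Qed.
Lemma vsum_swap K L (f : nat -> nat -> R) :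
  vsum K (fun i => vsum L (fun j => f i j)) = vsum L (fun j => vsum K (fun i => f i j)).
Proof. apply lsum_swap. Qed.

Lemma lprod_split l w f : NoDup l -> In w l ->
  lprod l f = f w * lprod l (fun t => if Nat.eqb t w then 1 else f t).
Proof. intros Hn Hw. rewrite <- (lprod_single l w (f w) Hn Hw), <- lprod_mult.
  apply lprod_ext. intros x _. destruct (Nat.eqb_spec x w); subst; ring. Qed.
Lemma lsum_split l w f : NoDup l -> In w l ->
  lsum l f = f w + lsum l (fun t => if Nat.eqb t w then 0 else f t).
Proof. intros Hn Hw. rewrite <- (lsum_single l w (f w) Hn Hw), <- lsum_plus.
  apply lsum_ext. intros x _. destruct (Nat.eqb_spec x w); subst; ring. Qed.
Lemma lsumn_split l w f : NoDup l -> In w l ->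
  lsumn l f = (f w + lsumn l (fun t => if Nat.eqb t w then 0 else f t))%nat.
Proof. induction l; simpl; intros Hn Hw; [contradiction|]. inversion Hn; subst.
  destruct (Nat.eqb_spec a w).
  - subst. f_equal. apply lsumn_ext. intros x Hx. destruct (Nat.eqb_spec x w); subst; auto; contradiction.
  - destruct Hw as [Hw|Hw]; [congruence|]. rewrite IHl; auto. lia. Qed.

Lemma vprod_split K w f : (w < K)%nat ->
  vprod K f = f w * vprod K (fun t => if Nat.eqb t w then 1 else f t).
Proof. intros. apply lprod_split. apply seq_NoDup. apply in_seq0; auto. Qed.
Lemma vsum_split K w f : (w < K)%nat ->
  vsum K f = f w + vsum K (fun t => if Nat.eqb t w then 0 else f t).
Proof. intros. apply lsum_split. apply seq_NoDup. apply in_seq0; auto. Qed.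
Lemma vsumn_split K w f : (w < K)%nat ->
  vsumn K f = (f w + vsumn K (fun t => if Nat.eqb t w then 0 else f t))%nat.
Proof. intros. apply lsumn_split. apply seq_NoDup. apply in_seq0; auto. Qed.

Lemma INR_lsumn l g : INR (lsumn l g) = lsum l (fun t => INR (g t)).
Proof. induction l; simpl; auto. rewrite plus_INR, IHl. auto. Qed.
Lemma INR_vsumn K g : INR (vsumn K g) = vsum K (fun t => INR (g t)).
Proof. apply INR_lsumn. Qed.

Lemma isum_scal l M c f : isum l M (fun m => c * f m) = c * isum l M f.
Proof. revert f. induction l; intros f; simpl; auto. unfold psum. rewrite <- lsum_scal.
  apply lsum_ext. intros. apply IHl. Qed.


Open Scope nat_scope.

Section Tree.
Context (K : nat) (par : nat -> nat) (Htree : is_tree K par).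

Definition it k v := Nat.iter k par v.
Definition path_ok v k := forall j, j < k -> it j v <> 0.
Definition ancP a v := exists k, 1 <= k /\ it k v = a /\ path_ok v k.

Lemma it_add k m v : it (k + m) v = it k (it m v).
Proof. apply Nat.iter_add. Qed.
Lemma it_S k v : it (S k) v = par (it k v).
Proof. reflexivity. Qed.
Lemma it_S' k v : it (S k) v = it k (par v).
Proof. replace (S k) with (k + 1) by lia. rewrite it_add. reflexivity. Qed.

Lemma it_lt v k : v < K -> path_ok v k -> forall j, j <= k -> it j v < K.
Proof. destruct Htree as [HK [Hp _]]. intros Hv Hok j. induction j; intros Hj; [simpl; auto|].
  rewrite it_S. apply Hp. split; [|apply IHj; lia].
  pose proof (Hok j ltac:(lia)). lia. Qed.

Lemma periodic v i j : i < j -> it i v = it j v ->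
  (forall t, i <= t < j -> it t v <> 0) -> forall t, i <= t -> it t v <> 0.
Proof. intros Hij Heq Hnz.
  assert (Hq : forall q, it (j + q) v = it (i + q) v).
  { intros q. replace (j + q) with (q + j) by lia. replace (i + q) with (q + i) by lia.
    rewrite !it_add, Heq. reflexivity. }
  intros t. induction t as [t IH] using (well_founded_induction lt_wf). intros Ht.
  destruct (Nat.lt_ge_cases t j). { apply Hnz; lia. }
  replace t with (j + (t - j)) by lia. rewrite Hq. apply IH; lia. Qed.

Lemma tree_reach v : v < K -> exists m, it m v = 0.
Proof. destruct Htree as [_ [_ H]]. apply H. Qed.

Lemma path_bound v k : v < K -> path_ok v k -> k < K.
Proof. intros Hv Hok. destruct (tree_reach v Hv) as [m Hm].
  assert (Hdist : forall i j, i < j < k -> it i v <> it j v).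
  { intros i j Hij Heq. assert (m >= k) by (destruct (Nat.lt_ge_cases m k); auto; exfalso; apply (Hok m); auto).
    eapply (periodic v i j); [lia|auto| |  |exact Hm]. intros; apply Hok; lia. lia. }
  assert (HN : NoDup (map (fun j => it j v) (seq 0 k))).
  { clear Hm. induction k; [simpl; constructor|]. rewrite seq_S, map_app. simpl.
    apply Permutation_NoDup with (it k v :: map (fun j => it j v) (seq 0 k)).
    - apply Permutation_cons_append.
    - constructor. + intros Hin. apply in_map_iff in Hin. destruct Hin as [x [Hx Hin]].
        apply in_seq in Hin. apply (Hdist x k); auto. lia.
      + apply IHk. intros j Hj; apply Hok; lia. intros; apply Hdist; lia. }
  assert (Hinc : incl (map (fun j => it j v) (seq 0 k)) (seq 1 (K - 1))).
  { intros x Hx. apply in_map_iff in Hx. destruct Hx as [j [Hj Hin]]. apply in_seq in Hin. subst.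
    apply in_seq. pose proof (Hok j ltac:(lia)). pose proof (it_lt v k Hv Hok j ltac:(lia)). lia. }
  pose proof (NoDup_incl_length HN Hinc). rewrite length_map, !length_seq in H.
  destruct Htree. lia. Qed.

Lemma is_anc_iff a v : v < K -> is_anc K par a v = true <-> ancP a v.
Proof. intros Hv. unfold is_anc. rewrite existsb_exists. split.
  - intros [k [Hk Hb]]. apply in_seq in Hk. apply andb_prop in Hb. destruct Hb as [H1 H2].
    apply Nat.eqb_eq in H1. rewrite forallb_forall in H2. exists k. split; [lia|]. split; [auto|].
    intros j Hj. specialize (H2 j). rewrite in_seq in H2. specialize (H2 ltac:(lia)).
    apply Bool.negb_true_iff, Nat.eqb_neq in H2. auto.
  - intros [k [Hk [Ha Hok]]]. pose proof (path_bound v k Hv Hok). exists k. split.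
    + apply in_seq; lia.
    + apply andb_true_intro; split. apply Nat.eqb_eq; auto.
      apply forallb_forall. intros j Hj. apply in_seq in Hj. apply Bool.negb_true_iff, Nat.eqb_neq.
      apply Hok; lia. Qed.

Lemma anc_lt a v : v < K -> ancP a v -> a < K.
Proof. intros Hv [k [Hk [Ha Hok]]]. subst. apply (it_lt v k Hv Hok). lia. Qed.

Lemma anc_irrefl v : v < K -> ~ ancP v v.
Proof. intros Hv [k [Hk [Ha Hok]]]. destruct (tree_reach v Hv) as [m Hm].
  eapply (periodic v 0 k); [lia| simpl; auto| |  |exact Hm]. intros; apply Hok; lia. lia. Qed.

Lemma anc_trans a b c : ancP a b -> ancP b c -> ancP a c.
Proof. intros [k2 [H2 [Ha Hok2]]] [k1 [H1 [Hb Hok1]]]. exists (k2 + k1). split; [lia|].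
  split. rewrite it_add, Hb; auto.
  intros j Hj. destruct (Nat.lt_ge_cases j k1). apply Hok1; auto.
  replace j with ((j - k1) + k1) by lia. rewrite it_add, Hb. apply Hok2; lia. Qed.

Lemma anc_chain a b u : ancP a u -> ancP b u -> a = b \/ ancP a b \/ ancP b a.
Proof. intros [ka [Ha [Hau Hoka]]] [kb [Hb [Hbu Hokb]]].
  destruct (Nat.lt_trichotomy ka kb) as [Hl|[He|Hl]].
  - right; right. exists (kb - ka). split; [lia|]. split.
    + rewrite <- Hau, <- it_add. replace (kb - ka + ka) with kb by lia. auto.
    + intros j Hj. rewrite <- Hau, <- it_add. apply Hokb; lia.
  - left. subst. auto.
  - right; left. exists (ka - kb). split; [lia|]. split.
    + rewrite <- Hbu, <- it_add. replace (ka - kb + kb) with ka by lia. auto.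
    + intros j Hj. rewrite <- Hbu, <- it_add. apply Hoka; lia. Qed.

Lemma anc_root a : ~ ancP a 0.
Proof. intros [k [Hk [_ Hok]]]. apply (Hok 0); [lia|reflexivity]. Qed.

Lemma anc_par a t : 0 < t < K -> (ancP a t <-> a = par t \/ ancP a (par t)).
Proof. intros Ht. split.
  - intros [k [Hk [Ha Hok]]]. destruct k as [|k]; [lia|]. destruct k as [|k].
    + left. rewrite <- Ha. reflexivity.
    + right. exists (S k). split; [lia|]. split. rewrite <- it_S'. auto.
      intros j Hj. rewrite <- it_S'. apply Hok; lia.
  - intros [H|[k [Hk [Ha Hok]]]].
    + exists 1. split; [lia|]. split; [auto|]. intros j Hj. replace j with 0 by lia. simpl. lia.
    + exists (S k). split; [lia|]. split. rewrite it_S'; auto.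
      intros j Hj. destruct j. simpl; lia. rewrite it_S'. apply Hok; lia. Qed.

Lemma par_lt t : 0 < t < K -> par t < K.
Proof. destruct Htree as [_ [H _]]. apply H. Qed.

Definition key v := length (filter (fun a => is_anc K par a v) (seq 0 K)).

Lemma filter_lt_length (l : list nat) (p q : nat -> bool) :
  (forall x, In x l -> p x = true -> q x = true) ->
  (exists x, In x l /\ q x = true /\ p x = false) ->
  length (filter p l) < length (filter q l).
Proof. induction l as [|y l IH]; simpl; intros H1 [x [Hx [Hq Hp]]]; [contradiction|].
  assert (Hle : forall l', (forall x, In x l' -> p x = true -> q x = true) ->
     length (filter p l') <= length (filter q l')).
  { induction l' as [|z l' IH']; simpl; intros H; auto.
    destruct (p z) eqn:E. rewrite (H z (or_introl eq_refl) E). simpl. apply le_n_S. apply IH'; auto.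
    destruct (q z); simpl; [apply le_S|]; apply IH'; auto. }
  destruct Hx as [Hx|Hx].
  - subst. rewrite Hp, Hq. simpl. apply le_n_S. apply Hle; auto.
  - destruct (p y) eqn:E. rewrite (H1 y (or_introl eq_refl) E). simpl. apply le_n_S. apply IH; eauto.
    destruct (q y); simpl; [apply le_S|]; apply IH; eauto. Qed.

Lemma key_lt a v : v < K -> ancP a v -> key a < key v.
Proof. intros Hv Ha. pose proof (anc_lt a v Hv Ha) as HaK. unfold key. apply filter_lt_length.
  - intros x Hx H. apply in_seq in Hx. apply is_anc_iff in H; auto. apply is_anc_iff; auto.
    eapply anc_trans; eauto.
  - exists a. split. apply in_seq; lia. split. apply is_anc_iff; auto.
    destruct (is_anc K par a a) eqn:E; auto. apply is_anc_iff in E; auto. exfalso; apply (anc_irrefl a); auto. Qed.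

End Tree.


Open Scope R_scope.

Lemma C_nn n : C n n = 1.
Proof. unfold C. rewrite Nat.sub_diag. simpl. field. apply INR_fact_neq_0. Qed.
Lemma C_n0 n : C n 0 = 1.
Proof. unfold C. rewrite Nat.sub_0_r. simpl. field. apply INR_fact_neq_0. Qed.

Lemma C_nonneg n k : 0 <= C n k.
Proof. unfold C. apply Rle_mult_inv_pos. apply pos_INR.
  apply Rmult_lt_0_compat; apply INR_fact_lt_0. Qed.

Lemma C_pos n k : (k <= n)%nat -> 0 < C n k.
Proof. intros. unfold C. apply Rdiv_lt_0_compat. apply INR_fact_lt_0.
  apply Rmult_lt_0_compat; apply INR_fact_lt_0. Qed.

Lemma C_shift i s : INR (S i) * C (S i + s) (S i) = INR (S s) * C (S i + s) i.
Proof. unfold C. replace (S i + s - S i)%nat with s by lia.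
  replace (S i + s - i)%nat with (S s) by lia.
  rewrite !fact_simpl, !mult_INR.
  pose proof (INR_fact_neq_0 i). pose proof (INR_fact_neq_0 s).
  field. split; auto. split; auto. rewrite S_INR. pose proof (pos_INR s). lra.
  split; auto. rewrite S_INR. pose proof (pos_INR i). lra. Qed.

Lemma cv_shift1 (u : nat -> R) L : Un_cv (fun M => u (S M)) L -> Un_cv u L.
Proof. intros H eps He. destruct (H eps He) as [N HN]. exists (S N). intros n Hn.
  destruct n; [lia|]. apply HN; lia. Qed.

Lemma cv_scal (u : nat -> R) L c : Un_cv u L -> Un_cv (fun M => c * u M) (c * L).
Proof. intros H. apply CV_mult; auto. intros e He. exists 0%nat. intros. unfold R_dist.
  rewrite Rminus_diag, Rabs_R0. auto. Qed.

Definition nb (s : nat) (z : R) (M : nat) := psum M (fun j => C (j + s) j * z ^ j).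

Lemma nb_rec0 z M : (1 - z) * nb 0 z M = 1 - z ^ (S M).
Proof. unfold nb. induction M.
  - unfold psum; simpl. rewrite C_nn. ring.
  - rewrite psum_S, Rmult_plus_distr_l, IHM. rewrite Nat.add_0_r, C_nn. simpl. ring. Qed.

Lemma nb_rec s z M : (1 - z) * nb (S s) z M = nb s z M - C (M + S s) M * z ^ (S M).
Proof. unfold nb. induction M.
  - unfold psum; simpl. rewrite !C_n0. ring.
  - rewrite !psum_S, Rmult_plus_distr_l, IHM.
    assert (Hp : C (S M + S s) (S M) = C (M + S s) M + C (S M + s) (S M)).
    { replace (S M + s)%nat with (M + S s)%nat by lia. rewrite pascal by lia. f_equal. }
    rewrite Hp. simpl. ring. Qed.

Lemma nb_growing s z : 0 <= z -> Un_growing (nb s z).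
Proof. intros Hz M. unfold nb. rewrite psum_S. pose proof (C_nonneg (S M + s) (S M)).
  pose proof (pow_le z (S M) Hz). pose proof (Rmult_le_pos _ _ H H0). lra. Qed.

Lemma pow_cv0 z : 0 <= z < 1 -> Un_cv (fun n => z ^ n) 0.
Proof. intros Hz e He. destruct (pow_lt_1_zero z ltac:(rewrite Rabs_right; lra) e He) as [N HN].
  exists N. intros n Hn. unfold R_dist. rewrite Rminus_0_r. apply HN; auto. Qed.

Lemma cv_const c : Un_cv (fun _ => c) c.
Proof. intros e He; exists 0%nat; intros; unfold R_dist; rewrite Rminus_diag, Rabs_R0; auto. Qed.

Lemma nb_cv s z : 0 <= z < 1 -> Un_cv (nb s z) (/ (1 - z) ^ (S s)).
Proof. intros Hz. induction s.
  - eapply Un_cv_ext. { intros M. symmetry.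
      replace (nb 0 z M) with ((1 - z ^ S M) * / (1 - z)). reflexivity.
      rewrite <- nb_rec0. field. lra. }
    replace (/ (1 - z) ^ 1) with ((1 - 0) * / (1 - z)) by (simpl; field; lra).
    apply CV_mult; [|apply cv_const].
    apply CV_minus; [apply cv_const|].
    pose proof (CV_shift' _ 1 _ (pow_cv0 z Hz)) as H. eapply Un_cv_ext; [|exact H]. intros; simpl.
    rewrite Nat.add_1_r. reflexivity.
  - assert (Hb : has_ub (nb (S s) z)).
    { exists (/ (1 - z) ^ S s / (1 - z)). intros x [M HM]. subst x.
      pose proof (cv_le_lim _ _ (nb_growing s z ltac:(lra)) IHs M).
      pose proof (nb_rec s z M).
      pose proof (C_nonneg (M + S s) M). pose proof (pow_le z (S M) ltac:(lra)).
      pose proof (Rmult_le_pos _ _ H1 H2).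
      apply Rmult_le_reg_l with (1 - z); [lra|]. unfold Rdiv. rewrite (Rmult_comm _ (/ (1 - z))), <- Rmult_assoc, Rinv_r by lra. lra. }
    destruct (growing_cv _ (nb_growing (S s) z ltac:(lra)) Hb) as [L HL].
    assert (Ht : Un_cv (fun M => C (M + S s) M * z ^ S M) 0).
    { assert (H0 := series_term_0 _ _ HL).
      replace 0 with (0 * z) by ring. eapply Un_cv_ext; [|apply (CV_mult _ _ _ _ H0 (cv_const z))].
      intros M. simpl. ring. }
    assert (HL2 : Un_cv (fun M => (1 - z) * nb (S s) z M) (/ (1 - z) ^ S s - 0)).
    { eapply Un_cv_ext. { intros M. symmetry. apply nb_rec. } apply CV_minus; auto. }
    assert (HL3 := cv_scal _ _ (1 - z) HL).
    assert (Heq := UL_sequence _ _ _ HL2 HL3).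
    replace (/ (1 - z) ^ S (S s)) with L; auto.
    apply Rmult_eq_reg_l with (1 - z); [|lra]. rewrite <- Heq. simpl. field. split; [|lra].
    apply pow_nonzero. lra. Qed.

Lemma psum_shift M g : psum (S M) g = g 0%nat + psum M (fun j => g (S j)).
Proof. unfold psum. change (seq 0 (S (S M))) with (0%nat :: seq 1 (S M)).
  change (lsum (0%nat :: seq 1 (S M)) g) with (g 0%nat + lsum (seq 1 (S M)) g). f_equal.
  rewrite <- seq_shift. generalize (seq 0 (S M)); intros l; induction l as [|x l IH]; [reflexivity|].
  change (g (S x) + lsum (map S l) g = g (S x) + lsum l (fun j => g (S j))). rewrite IH; auto. Qed.

Definition nb1 (s : nat) (z : R) (M : nat) := psum M (fun j => INR j * (C (j + s) j * z ^ j)).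

Lemma nb1_cv s z : 0 <= z < 1 -> Un_cv (nb1 s z) (INR (S s) * z * / (1 - z) ^ (S (S s))).
Proof. intros Hz. apply cv_shift1.
  eapply Un_cv_ext. 2: { apply cv_scal. apply nb_cv; auto. }
  intros M. unfold nb1, nb. rewrite psum_shift. rewrite INR_0, Rmult_0_l, Rplus_0_l.
  unfold psum. rewrite <- lsum_scal. apply lsum_ext. intros j _.
  rewrite <- (Rmult_assoc (INR (S j))), C_shift. replace (S j + s)%nat with (j + S s)%nat by lia. simpl pow. ring. Qed.


Open Scope R_scope.

Section Main.
Context (K : nat) (par : nat -> nat) (rho : nat -> R).
Context (Htree : is_tree K par).
Context (Hrho : forall v, (v < K)%nat -> 0 < rho v).
Context (Hsub : forall v, (v < K)%nat -> sumAbar K par rho v < 1).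

Notation anc := (is_anc K par).
Notation ancq := (is_anc_eq K par).
Notation sumA' := (sumA K par rho).
Notation sumAbar' := (sumAbar K par rho).
Notation subtot' := (subtot K par).

Lemma anc_lt_b a v : (v < K)%nat -> anc a v = true -> (a < K)%nat.
Proof. intros Hv H. apply (anc_lt K par Htree a v Hv). apply (is_anc_iff K par Htree); auto. Qed.
Lemma anc_irr_b v : (v < K)%nat -> anc v v = false.
Proof. intros Hv. destruct (anc v v) eqn:E; auto. apply (is_anc_iff K par Htree) in E; auto.
  exfalso; apply (anc_irrefl K par Htree v Hv E). Qed.
Lemma anc_trans_b a b c : (c < K)%nat -> anc a b = true -> anc b c = true -> anc a c = true.
Proof. intros Hc H1 H2. pose proof (anc_lt_b _ _ Hc H2) as Hb.
  apply (is_anc_iff K par Htree) in H1; auto. apply (is_anc_iff K par Htree) in H2; auto. apply (is_anc_iff K par Htree); auto.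
  eapply (anc_trans par); eauto. Qed.
Lemma anc_chain_b a b u : (u < K)%nat -> anc a u = true -> anc b u = true ->
  a = b \/ anc a b = true \/ anc b a = true.
Proof. intros Hu H1 H2. pose proof (anc_lt_b _ _ Hu H1). pose proof (anc_lt_b _ _ Hu H2).
  apply (is_anc_iff K par Htree) in H1; auto. apply (is_anc_iff K par Htree) in H2; auto.
  destruct (anc_chain par a b u H1 H2) as [H3|[H3|H3]]; auto.
  right; left; apply (is_anc_iff K par Htree); auto; lia. right; right; apply (is_anc_iff K par Htree); auto. Qed.
Lemma ancq_eq a v : ancq a v = (Nat.eqb a v || anc a v)%bool.
Proof. reflexivity. Qed.

Definition memb (T : list nat) (u : nat) : bool := existsb (Nat.eqb u) T.
Lemma memb_iff T u : memb T u = true <-> In u T.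
Proof. unfold memb. rewrite existsb_exists. split.
  - intros [x [Hx He]]. apply Nat.eqb_eq in He. subst; auto.
  - intros H. exists u. split; auto. apply Nat.eqb_refl. Qed.
Lemma memb_cons w T u : memb (w :: T) u = (Nat.eqb u w || memb T u)%bool.
Proof. reflexivity. Qed.
Lemma memb_false T u : ~ In u T -> memb T u = false.
Proof. intros H. destruct (memb T u) eqn:E; auto. apply memb_iff in E. contradiction. Qed.

Lemma sumA_nonneg v : 0 <= sumA' v.
Proof. apply vsum_nonneg. intros a Ha. destruct (anc a v); [apply Rlt_le, Hrho; auto|lra]. Qed.
Lemma sumAbar_eq v : (v < K)%nat -> sumAbar' v = rho v + sumA' v.
Proof. intros Hv. unfold sumAbar, sumA. rewrite (vsum_split K v _ Hv), (vsum_split K v (fun a => if anc a v then _ else _) Hv).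
  rewrite ancq_eq, Nat.eqb_refl, anc_irr_b; auto. simpl. f_equal. rewrite Rplus_0_l.
  apply vsum_ext. intros x Hx. rewrite ancq_eq. destruct (Nat.eqb_spec x v); auto. Qed.
Lemma one_m_sumA v : (v < K)%nat -> 0 < 1 - sumA' v.
Proof. intros Hv. pose proof (Hsub v Hv). pose proof (Hrho v Hv). rewrite sumAbar_eq in H; auto. lra. Qed.
Lemma one_m_sumAbar v : (v < K)%nat -> 0 < 1 - sumAbar' v.
Proof. intros Hv. pose proof (Hsub v Hv). lra. Qed.

Definition sumAT (T : list nat) (u : nat) : R :=
  vsum K (fun a => if (anc a u && memb T a)%bool then rho a else 0).
Definition cfac (t : nat) : R := (1 - sumA' t) / (1 - sumAbar' t).
Definition wf (T : list nat) (n : nat -> nat) (t : nat) : R :=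
  if memb T t then cfac t
  else (rho t / (1 - sumAT T t)) ^ (n t) * C (subtot' n t) (n t).
Definition W (T : list nat) (n : nat -> nat) : R := vprod K (wf T n).
Definition ovr (T : list nat) (m n : nat -> nat) : nat -> nat :=
  fun u => if memb T u then m u else n u.
Definition Sw (w : nat) (n : nat -> nat) : nat := vsumn K (fun d => if anc w d then n d else 0%nat).

Definition hterm (T : list nat) (v : nat) (n : nat -> nat) (t : nat) : R :=
  (if (memb T t && ancq v t)%bool then / (1 - sumAbar' t) else 0)
  - (if (memb T t && anc v t)%bool then / (1 - sumA' t) else 0)
  + (if (negb (memb T t) && anc v t)%bool then INR (n t) / (1 - sumAT T t) else 0).
Definition hf (T : list nat) (v : nat) (n : nat -> nat) : R :=
  if memb T v then rho v * vsum K (hterm T v n) else INR (n v).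

Record cond (w : nat) (T : list nat) : Prop := {
  c_w : (w < K)%nat;
  c_nin : ~ In w T;
  c_lt : forall t, In t T -> (t < K)%nat;
  c_closed : forall t a, In t T -> anc a t = true -> In a T;
  c_wanc : forall a, anc a w = true -> In a T }.

Section Step.
Context (w : nat) (T : list nat) (Hc : cond w T).

Lemma s_memb_w : memb T w = false.
Proof. apply memb_false, (c_nin _ _ Hc). Qed.

Lemma s_T_not_desc t : In t T -> anc w t = false.
Proof. intros Ht. destruct (anc w t) eqn:E; auto. exfalso. apply (c_nin _ _ Hc).
  eapply (c_closed _ _ Hc); eauto. Qed.

Lemma s_not_anc_w t : (t < K)%nat -> ~ In t T -> anc t w = false.
Proof. intros Ht Hn. destruct (anc t w) eqn:E; auto. exfalso. apply Hn. apply (c_wanc _ _ Hc); auto. Qed.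

Lemma s_sumAT_w : sumAT T w = sumA' w.
Proof. unfold sumAT, sumA. apply vsum_ext. intros a Ha. destruct (anc a w) eqn:E; simpl; auto.
  replace (memb T a) with true; auto. symmetry. apply memb_iff. apply (c_wanc _ _ Hc); auto. Qed.

Lemma s_sumAT_desc t : (t < K)%nat -> anc w t = true -> sumAT T t = sumA' w.
Proof. intros Ht Hwt. unfold sumAT, sumA. apply vsum_ext. intros a Ha.
  destruct (anc a w) eqn:E.
  - rewrite (anc_trans_b a w t Ht E Hwt). replace (memb T a) with true; auto. symmetry. apply memb_iff. apply (c_wanc _ _ Hc); auto.
  - destruct (anc a t) eqn:E2; simpl; auto. destruct (memb T a) eqn:E3; auto.
    apply memb_iff in E3. destruct (anc_chain_b a w t Ht E2 Hwt) as [H|[H|H]].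
    + subst. exfalso; apply (c_nin _ _ Hc); auto.
    + congruence.
    + exfalso. apply (c_nin _ _ Hc). eapply (c_closed _ _ Hc); eauto. Qed.

Lemma s_sumAT_desc' t : (t < K)%nat -> anc w t = true -> sumAT (w :: T) t = sumA' w + rho w.
Proof. intros Ht Hwt. rewrite <- (s_sumAT_desc t Ht Hwt).
  transitivity (vsum K (fun a => (if Nat.eqb a w then rho w else 0) + (if (anc a t && memb T a)%bool then rho a else 0))).
  - unfold sumAT. apply vsum_ext. intros a Ha. rewrite memb_cons. destruct (Nat.eqb_spec a w).
    + subst. rewrite Hwt, s_memb_w. simpl. ring.
    + simpl. ring.
  - rewrite vsum_plus. rewrite Rplus_comm. f_equal. apply lsum_single. apply seq_NoDup. apply in_seq0, (c_w _ _ Hc). Qed.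

Lemma s_sumAT_ndesc t : anc w t = false -> sumAT (w :: T) t = sumAT T t.
Proof. intros Hwt. unfold sumAT. apply vsum_ext. intros a Ha. rewrite memb_cons.
  destruct (Nat.eqb_spec a w); subst; auto. rewrite Hwt; auto. Qed.

Lemma s_subtot_other n j t : (t < K)%nat -> t <> w -> anc t w = false ->
  subtot' (upd n w j) t = subtot' n t.
Proof. intros Ht Htw Hanc. unfold subtot. apply vsumn_ext. intros d Hd. unfold upd.
  destruct (Nat.eqb_spec d w); subst; auto. rewrite ancq_eq, Hanc.
  destruct (Nat.eqb_spec t w); [congruence|]. auto. Qed.

Lemma s_subtot_w n j : subtot' (upd n w j) w = (j + Sw w n)%nat.
Proof. unfold subtot, Sw. rewrite (vsumn_split K w _ (c_w _ _ Hc)). rewrite ancq_eq, Nat.eqb_refl. simpl.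
  unfold upd at 1. rewrite Nat.eqb_refl. f_equal. apply vsumn_ext. intros d Hd.
  rewrite ancq_eq. destruct (Nat.eqb_spec d w); subst.
  - rewrite anc_irr_b; auto. 
  - destruct (Nat.eqb_spec w d); [congruence|]. simpl. unfold upd. destruct (Nat.eqb_spec d w); [congruence|]. auto. Qed.

Definition zw := rho w / (1 - sumA' w).
Definition Qw := (1 - sumA' w) / (1 - sumAbar' w).
Definition Pw (n : nat -> nat) := vprod K (fun t => if Nat.eqb t w then 1 else wf T n t).

Lemma s_W_upd n j : W T (upd n w j) = (C (j + Sw w n) j * zw ^ j) * Pw n.
Proof. unfold W, Pw. rewrite (vprod_split K w _ (c_w _ _ Hc)). f_equal.
  - unfold wf. rewrite s_memb_w, s_sumAT_w, s_subtot_w. unfold upd. rewrite Nat.eqb_refl. unfold zw. ring.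
  - apply vprod_ext. intros t Ht. destruct (Nat.eqb_spec t w); auto. unfold wf.
    destruct (memb T t) eqn:E; auto. rewrite s_subtot_other; auto.
    + unfold upd. destruct (Nat.eqb_spec t w); [congruence|]. auto.
    + apply s_not_anc_w; auto. intros Hin. apply memb_iff in Hin. congruence. Qed.

Lemma s_W_cons n : W (w :: T) n = cfac w * Qw ^ (Sw w n) * Pw n.
Proof. unfold W, Pw. rewrite (vprod_split K w _ (c_w _ _ Hc)). unfold wf at 1. rewrite memb_cons, Nat.eqb_refl. simpl.
  rewrite Rmult_assoc. f_equal. unfold Sw. rewrite <- vprod_pow, <- vprod_mult. apply vprod_ext. intros t Ht.
  destruct (Nat.eqb_spec t w).
  - subst. rewrite anc_irr_b by auto. simpl. ring.
  - unfold wf. rewrite memb_cons. destruct (Nat.eqb_spec t w); [congruence|]. simpl.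
    destruct (memb T t) eqn:E.
    + rewrite s_T_not_desc by (apply memb_iff; auto). simpl. ring.
    + destruct (anc w t) eqn:Ew.
      * rewrite s_sumAT_desc', s_sumAT_desc by auto. rewrite <- Rmult_assoc, <- Rpow_mult_distr. f_equal. f_equal.
        unfold Qw. pose proof (one_m_sumA w (c_w _ _ Hc)). pose proof (one_m_sumAbar w (c_w _ _ Hc)).
        rewrite sumAbar_eq in * by (apply (c_w _ _ Hc)). field. lra.
      * rewrite s_sumAT_ndesc by auto. simpl. ring. Qed.

Lemma s_z_range : 0 <= zw < 1.
Proof. pose proof (c_w _ _ Hc) as Hw. pose proof (one_m_sumA w Hw). pose proof (one_m_sumAbar w Hw).
  pose proof (Hrho w Hw). rewrite sumAbar_eq in H0 by auto. unfold zw. split.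
  apply Rlt_le, Rdiv_lt_0_compat; lra. apply Rmult_lt_reg_r with (1 - sumA' w); auto.
  unfold Rdiv. rewrite Rmult_assoc, Rinv_l by lra. lra. Qed.

Lemma s_inv_pow k : / (1 - zw) ^ k = Qw ^ k.
Proof. pose proof (c_w _ _ Hc) as Hw. pose proof (one_m_sumA w Hw). pose proof (one_m_sumAbar w Hw).
  rewrite <- pow_inv. f_equal. unfold Qw, zw. rewrite sumAbar_eq in * by auto. field. lra. Qed.

Lemma s_cfac_Q : cfac w = Qw.
Proof. reflexivity. Qed.

Lemma lim_lin n (a b : R) :
  Un_cv (fun M => psum M (fun j => (a + b * INR j) * W T (upd n w j)))
        ((a * / (1 - zw) ^ (S (Sw w n)) + b * (INR (S (Sw w n)) * zw * / (1 - zw) ^ (S (S (Sw w n))))) * Pw n).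
Proof. eapply Un_cv_ext. 2: { apply CV_mult; [|apply cv_const].
    apply CV_plus; apply cv_scal; [apply nb_cv|apply nb1_cv]; apply s_z_range. }
  intros M. simpl. unfold nb, nb1, psum. rewrite <- !lsum_scal, <- lsum_plus, Rmult_comm, <- lsum_scal.
  apply lsum_ext. intros j _. rewrite s_W_upd. ring. Qed.

Lemma step0 n : Un_cv (fun M => psum M (fun j => W T (upd n w j))) (W (w :: T) n).
Proof.
  replace (W (w :: T) n) with ((1 * / (1 - zw) ^ S (Sw w n) + 0 * (INR (S (Sw w n)) * zw * / (1 - zw) ^ S (S (Sw w n)))) * Pw n).
  2: { rewrite s_W_cons, s_inv_pow, s_cfac_Q. simpl. ring. }
  eapply Un_cv_ext. 2: apply (lim_lin n 1 0). intros M. unfold psum. apply lsum_ext. intros. ring. Qed.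


Lemma hterm_upd_other T' v n j t : t <> w -> hterm T' v (upd n w j) t = hterm T' v n t.
Proof. intros H. unfold hterm, upd. destruct (Nat.eqb_spec t w); [congruence|]. auto. Qed.

Lemma s7 v t : In v T -> (t < K)%nat -> anc w t = true -> anc v t = anc v w.
Proof. intros Hv Ht Hwt. destruct (anc v w) eqn:E.
  - apply (anc_trans_b v w t Ht E Hwt).
  - destruct (anc v t) eqn:E2; auto. exfalso. destruct (anc_chain_b v w t Ht E2 Hwt) as [H|[H|H]].
    + subst. apply (c_nin _ _ Hc); auto.
    + congruence.
    + apply (c_nin _ _ Hc). eapply (c_closed _ _ Hc); eauto. Qed.

Definition Dw := / (1 - sumAbar' w) - / (1 - sumA' w).

Lemma hsum_w n : vsum K (hterm (w :: T) w n) = (1 + INR (Sw w n)) / (1 - sumAbar' w).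
Proof. pose proof (c_w _ _ Hc) as Hw. rewrite (vsum_split K w _ Hw). unfold hterm at 1.
  rewrite memb_cons, Nat.eqb_refl, ancq_eq, Nat.eqb_refl, anc_irr_b by auto. simpl.
  unfold Sw. rewrite INR_vsumn. unfold Rdiv. rewrite Rmult_plus_distr_r. f_equal. ring.
  rewrite Rmult_comm, <- vsum_scal. apply vsum_ext. intros t Ht.
  destruct (Nat.eqb_spec t w).
  - subst. rewrite anc_irr_b; auto. simpl. ring.
  - unfold hterm. rewrite memb_cons, ancq_eq. destruct (Nat.eqb_spec t w); [congruence|].
    destruct (Nat.eqb_spec w t); [congruence|]. simpl.
    destruct (memb T t) eqn:E.
    + rewrite s_T_not_desc by (apply memb_iff; auto). simpl. ring.
    + simpl. destruct (anc w t) eqn:E2.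
      * rewrite s_sumAT_desc', sumAbar_eq, (Rplus_comm (rho w)) by auto. unfold Rdiv. ring.
      * simpl. ring. Qed.

Lemma hsum_T_upd v n j : In v T ->
  vsum K (hterm T v (upd n w j)) =
  vsum K (fun t => if Nat.eqb t w then 0 else hterm T v n t) + (if anc v w then / (1 - sumA' w) else 0) * INR j.
Proof. intros Hv. pose proof (c_w _ _ Hc) as Hw. rewrite (vsum_split K w _ Hw). rewrite Rplus_comm. f_equal.
  - apply vsum_ext. intros t Ht. destruct (Nat.eqb_spec t w); auto. apply hterm_upd_other; auto.
  - unfold hterm. rewrite s_memb_w. simpl. unfold upd. rewrite Nat.eqb_refl.
    destruct (anc v w); [rewrite s_sumAT_w; unfold Rdiv|]; ring. Qed.

Lemma hsum_cons v n : In v T ->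
  vsum K (hterm (w :: T) v n) =
  vsum K (fun t => if Nat.eqb t w then 0 else hterm T v n t) + (if anc v w then 1 else 0) * (1 + INR (Sw w n)) * Dw.
Proof. intros Hv. pose proof (c_w _ _ Hc) as Hw.
  assert (Hvw : v <> w) by (intro; subst; apply (c_nin _ _ Hc); auto).
  rewrite (vsum_split K w _ Hw). unfold hterm at 1. rewrite memb_cons, Nat.eqb_refl, ancq_eq.
  destruct (Nat.eqb_spec v w); [congruence|]. simpl.
  transitivity ((if anc v w then 1 else 0) * Dw +
     (vsum K (fun t => if Nat.eqb t w then 0 else hterm T v n t) +
      vsum K (fun t => (if anc v w then 1 else 0) * Dw * INR (if anc w t then n t else 0%nat)))).
  2: { unfold Sw. rewrite INR_vsumn, vsum_scal. ring. }
  f_equal. { unfold Dw. destruct (anc v w); ring. }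
  rewrite <- vsum_plus. apply vsum_ext. intros t Ht. destruct (Nat.eqb_spec t w).
  - subst. rewrite anc_irr_b by auto. simpl. ring.
  - unfold hterm. rewrite memb_cons. destruct (Nat.eqb_spec t w); [congruence|]. simpl.
    destruct (memb T t) eqn:E.
    + rewrite s_T_not_desc by (apply memb_iff; auto). simpl. ring.
    + simpl. destruct (anc w t) eqn:E2.
      * rewrite (s7 v t Hv Ht E2). rewrite s_sumAT_desc', s_sumAT_desc by auto.
        unfold Dw. rewrite sumAbar_eq, (Rplus_comm (rho w)) by auto. destruct (anc v w); simpl; unfold Rdiv; ring.
      * rewrite s_sumAT_ndesc by auto. simpl. ring. Qed.

Lemma step1 v n : (v < K)%nat ->
  Un_cv (fun M => psum M (fun j => hf T v (upd n w j) * W T (upd n w j))) (hf (w :: T) v n * W (w :: T) n).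
Proof. intros Hv. pose proof (c_w _ _ Hc) as Hw.
  pose proof (one_m_sumA w Hw). pose proof (one_m_sumAbar w Hw). pose proof (sumAbar_eq w Hw) as HAb.
  destruct (memb (w :: T) v) eqn:Emv.
  - rewrite memb_cons in Emv. destruct (Nat.eqb_spec v w).
    + subst v.
      replace (hf (w :: T) w n * W (w :: T) n) with
        ((0 * / (1 - zw) ^ S (Sw w n) + 1 * (INR (S (Sw w n)) * zw * / (1 - zw) ^ S (S (Sw w n)))) * Pw n).
      2: { unfold hf. rewrite memb_cons, Nat.eqb_refl. cbn [orb]. rewrite hsum_w, s_W_cons, !s_inv_pow, s_cfac_Q.
           simpl pow. rewrite S_INR. unfold zw, Qw. rewrite HAb in *. field. lra. }
      eapply Un_cv_ext. 2: apply (lim_lin n 0 1). intros M. unfold psum. apply lsum_ext. intros j _.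
      unfold hf. rewrite s_memb_w. unfold upd. rewrite Nat.eqb_refl. ring.
    + simpl in Emv. assert (HvT : In v T) by (apply memb_iff; auto).
      set (X := vsum K (fun t => if Nat.eqb t w then 0 else hterm T v n t)).
      replace (hf (w :: T) v n * W (w :: T) n) with
        ((rho v * X * / (1 - zw) ^ S (Sw w n) + (rho v * (if anc v w then / (1 - sumA' w) else 0)) * (INR (S (Sw w n)) * zw * / (1 - zw) ^ S (S (Sw w n)))) * Pw n).
      2: { unfold hf. rewrite memb_cons, Emv, orb_true_r. rewrite hsum_cons, s_W_cons, !s_inv_pow, s_cfac_Q by auto.
           fold X. simpl pow. rewrite S_INR. unfold zw, Qw, Dw. rewrite HAb in *.
           destruct (anc v w); field; lra. }
      eapply Un_cv_ext. 2: apply (lim_lin n (rho v * X) (rho v * (if anc v w then / (1 - sumA' w) else 0))).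
      intros M. unfold psum. apply lsum_ext. intros j _.
      unfold hf. rewrite Emv, hsum_T_upd by auto. fold X. ring.
  - rewrite memb_cons in Emv. apply orb_false_iff in Emv. destruct Emv as [E1 E2].
    apply Nat.eqb_neq in E1.
    replace (hf (w :: T) v n * W (w :: T) n) with
      ((INR (n v) * / (1 - zw) ^ S (Sw w n) + 0 * (INR (S (Sw w n)) * zw * / (1 - zw) ^ S (S (Sw w n)))) * Pw n).
    2: { unfold hf. rewrite memb_cons. destruct (Nat.eqb_spec v w); [congruence|]. rewrite E2. cbn [orb].
         rewrite s_W_cons, !s_inv_pow, s_cfac_Q. simpl pow. ring. }
    eapply Un_cv_ext. 2: apply (lim_lin n (INR (n v)) 0). intros M. unfold psum. apply lsum_ext. intros j _.
    unfold hf. rewrite E2. unfold upd. destruct (Nat.eqb_spec v w); [congruence|]. ring. Qed.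
End Step.

Lemma ovr_upd w T m n j : ~ In w T -> ovr (w :: T) (upd m w j) n = ovr T m (upd n w j).
Proof. intros H. apply functional_extensionality. intros u. unfold ovr, upd. rewrite memb_cons.
  destruct (Nat.eqb_spec u w); simpl.
  - subst. rewrite memb_false; auto.
  - destruct (memb T u); auto. Qed.

Lemma sumAT_nil t : sumAT [] t = 0.
Proof. unfold sumAT. transitivity (vsum K (fun _ => 0)); [|apply vsum_zero]. apply vsum_ext. intros. simpl. rewrite andb_false_r. auto. Qed.

Lemma W_nil_nonneg n : 0 <= W [] n.
Proof. apply vprod_nonneg. intros t Ht. unfold wf. simpl. rewrite sumAT_nil.
  apply Rmult_le_pos; [|apply C_nonneg]. apply pow_le. pose proof (Hrho t Ht). unfold Rdiv.
  rewrite Rminus_0_r, Rinv_1. lra. Qed.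

Definition good (T : list nat) : Prop :=
  (NoDup T /\ (forall t, In t T -> (t < K)%nat) /\ (forall t a, In t T -> anc a t = true -> In a T) /\ StronglySorted (fun x y => (key K par y <= key K par x)%nat) T)%type.

Lemma good_cons w T : good (w :: T) -> good T /\ cond w T.
Proof. intros [Hn [Hl [Hcl Hs]]]. inversion Hn; subst. apply StronglySorted_inv in Hs. destruct Hs as [Hs Hf].
  rewrite Forall_forall in Hf.
  assert (Hw : (w < K)%nat) by (apply Hl; left; auto).
  assert (HclT : forall t a, In t T -> anc a t = true -> In a T).
  { intros t a Ht Ha. destruct (Hcl t a (or_intror Ht) Ha) as [E|E]; auto. subst.
    exfalso. pose proof (Hf t Ht). assert (Htk : (t < K)%nat) by (apply Hl; right; auto).
    pose proof (key_lt K par Htree a t Htk). apply (is_anc_iff K par Htree) in Ha; auto. specialize (H0 Ha). lia. }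
  split; [split; [|split; [|split]]|]; auto.
  - intros; apply Hl; right; auto.
  - constructor; auto.
    + intros; apply Hl; right; auto.
    + intros a Ha. destruct (Hcl w a (or_introl eq_refl) Ha) as [E|E]; auto. subst.
      rewrite anc_irr_b in Ha; auto. discriminate. Qed.

Lemma main_claim T : good T -> forall n0,
  Un_cv (fun M => isum T M (fun m => W [] (ovr T m n0))) (W T n0) /\ (forall v, (v < K)%nat -> Un_cv (fun M => isum T M (fun m => INR (ovr T m n0 v) * W [] (ovr T m n0))) (hf T v n0 * W T n0)).
Proof. induction T as [|w T IH]; intros Hg n0.
  - simpl. split.
    + replace (ovr [] (fun _ => 0%nat) n0) with n0 by reflexivity. apply cv_const.
    + intros v Hv. unfold hf. simpl. unfold ovr. simpl. apply cv_const.
  - destruct (good_cons w T Hg) as [HgT Hc]. pose proof (c_nin _ _ Hc) as Hnin. split.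
    + apply tonelli with (g := fun j => W T (upd n0 w j)).
      * intros; apply W_nil_nonneg.
      * intros j. eapply Un_cv_ext. 2: apply (proj1 (IH HgT (upd n0 w j))). intros M. apply isum_ext. intros m.
        rewrite ovr_upd; auto.
      * apply step0; auto.
    + intros v Hv. apply tonelli with (g := fun j => hf T v (upd n0 w j) * W T (upd n0 w j)).
      * intros; apply Rmult_le_pos; [apply pos_INR|apply W_nil_nonneg].
      * intros j. eapply Un_cv_ext. 2: apply (proj2 (IH HgT (upd n0 w j)) v Hv). intros M. apply isum_ext. intros m.
        rewrite ovr_upd; auto.
      * apply step1; auto. Qed.

Lemma INR_length_filter (p : nat -> bool) l : INR (length (filter p l)) = lsum l (fun c => if p c then 1 else 0).
Proof. induction l; [reflexivity|]. cbn [filter lsum fold_right]. change (lsum l (fun c => if p c then 1 else 0)) with (lsum l (fun c => if p c then 1 else 0)).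
  destruct (p a); cbn [length]; [rewrite S_INR|]; rewrite IHl; unfold lsum; ring. Qed.

Lemma sumA_par t : (0 < t < K)%nat -> sumA' t = sumAbar' (par t).
Proof. intros Ht. unfold sumA, sumAbar. apply vsum_ext. intros a Ha.
  rewrite ancq_eq. replace (anc a t) with ((Nat.eqb a (par t)) || anc a (par t))%bool; auto.
  pose proof (par_lt K par Htree t Ht) as Hp.
  destruct (anc a t) eqn:E.
  - apply (is_anc_iff K par Htree) in E; try lia. apply (anc_par K par) in E; auto.
    destruct E as [E|E]. subst; rewrite Nat.eqb_refl; auto. apply (is_anc_iff K par Htree) in E; auto. rewrite E, orb_true_r; auto.
  - destruct (Nat.eqb_spec a (par t)).
    + exfalso. assert (ancP par a t) by (apply (anc_par K par); auto). apply (is_anc_iff K par Htree) in H; try lia. congruence.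
    + destruct (anc a (par t)) eqn:E2; auto. exfalso.
      assert (ancP par a t). { apply (anc_par K par); auto. right. apply (is_anc_iff K par Htree); auto. }
      apply (is_anc_iff K par Htree) in H; try lia. congruence. Qed.

Lemma anc_v_par v t : (0 < t < K)%nat -> anc v t = ancq v (par t).
Proof. intros Ht. pose proof (par_lt K par Htree t Ht) as Hp. rewrite ancq_eq.
  destruct (anc v t) eqn:E.
  - apply (is_anc_iff K par Htree) in E; try lia. apply (anc_par K par) in E; auto.
    destruct E as [E|E]. subst; rewrite Nat.eqb_refl; auto. apply (is_anc_iff K par Htree) in E; auto. rewrite E, orb_true_r; auto.
  - symmetry. apply orb_false_iff. split.
    + apply Nat.eqb_neq. intros Hq. assert (ancP par v t) by (apply (anc_par K par); auto).
      apply (is_anc_iff K par Htree) in H; try lia. congruence.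
    + destruct (anc v (par t)) eqn:E2; auto. exfalso.
      assert (ancP par v t). { apply (anc_par K par); auto. right. apply (is_anc_iff K par Htree); auto. }
      apply (is_anc_iff K par Htree) in H; try lia. congruence. Qed.

Lemma reindex v :
  vsum K (fun t => if anc v t then / (1 - sumA' t) else 0) =
  vsum K (fun u => if ancq v u then INR (nchildren K par u) / (1 - sumAbar' u) else 0).
Proof. set (h := fun u => if ancq v u then / (1 - sumAbar' u) else 0).
  transitivity (vsum K (fun t => if negb (Nat.eqb t 0) then h (par t) else 0)).
  - apply vsum_ext. intros t Ht. destruct (Nat.eqb_spec t 0).
    + subst. destruct (anc v 0) eqn:E; auto. apply (is_anc_iff K par Htree) in E; try lia.
      exfalso; apply (anc_root par v E).
    + simpl. unfold h. rewrite anc_v_par, sumA_par by lia. auto.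
  - transitivity (vsum K (fun u => h u * INR (nchildren K par u))).
    2: { apply vsum_ext. intros u Hu. unfold h. destruct (ancq v u); unfold Rdiv; ring. }
    unfold nchildren. transitivity (vsum K (fun u => vsum K (fun c => h u * (if (negb (Nat.eqb c 0) && Nat.eqb (par c) u)%bool then 1 else 0)))).
    2: { apply vsum_ext. intros u Hu. rewrite INR_length_filter, vsum_scal. auto. }
    rewrite vsum_swap. apply vsum_ext. intros c Hc. destruct (Nat.eqb_spec c 0); simpl.
    + symmetry. transitivity (vsum K (fun _ => 0)); [|apply vsum_zero]. apply vsum_ext. intros. ring.
    + rewrite <- (lsum_single (seq 0 K) (par c) (h (par c))). 2: apply seq_NoDup. 2: apply in_seq0, (par_lt K par Htree); lia.
      apply vsum_ext. intros u Hu. destruct (Nat.eqb_spec (par c) u), (Nat.eqb_spec u (par c)); subst; try congruence; ring. Qed.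
End Main.


Open Scope R_scope.

Fixpoint ins (kk : nat -> nat) (x : nat) (l : list nat) : list nat :=
  match l with
  | [] => [x]
  | y :: l' => if Nat.leb (kk y) (kk x) then x :: l else y :: ins kk x l'
  end.
Fixpoint isort (kk : nat -> nat) (l : list nat) : list nat :=
  match l with [] => [] | x :: l' => ins kk x (isort kk l') end.

Lemma ins_perm kk x l : Permutation (ins kk x l) (x :: l).
Proof. induction l; simpl; auto. destruct (Nat.leb (kk a) (kk x)); auto.
  eapply perm_trans; [apply perm_skip; apply IHl|]. apply perm_swap. Qed.
Lemma isort_perm kk l : Permutation (isort kk l) l.
Proof. induction l; simpl; auto. eapply perm_trans; [apply ins_perm|]. auto. Qed.
Lemma ins_sorted kk x l : StronglySorted (fun a b => (kk b <= kk a)%nat) l ->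
  StronglySorted (fun a b => (kk b <= kk a)%nat) (ins kk x l).
Proof. induction l as [|y l IH]; simpl; intros H.
  - repeat constructor.
  - apply StronglySorted_inv in H. destruct H as [H1 H2]. rewrite Forall_forall in H2.
    destruct (Nat.leb_spec (kk y) (kk x)).
    + constructor. { constructor; auto. apply Forall_forall; auto. }
      constructor; [lia|]. apply Forall_forall. intros z Hz. specialize (H2 z Hz). lia.
    + constructor; auto. apply Forall_forall. intros z Hz.
      apply (Permutation_in _ (ins_perm kk x l)) in Hz. destruct Hz as [Hz|Hz]; subst; auto. lia. Qed.
Lemma isort_sorted kk l : StronglySorted (fun a b => (kk b <= kk a)%nat) (isort kk l).
Proof. induction l; simpl. constructor. apply ins_sorted; auto. Qed.

Section Final.
Context (K : nat) (par : nat -> nat) (rho : nat -> R).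
Context (Htree : is_tree K par).
Context (Hrho : forall v, (v < K)%nat -> 0 < rho v).
Context (Hsub : forall v, (v < K)%nat -> sumAbar K par rho v < 1).

Definition fl := isort (key K par) (seq 0 K).

Lemma fl_in t : In t fl <-> (t < K)%nat.
Proof. rewrite <- in_seq0. split; apply Permutation_in; [apply isort_perm|apply Permutation_sym, isort_perm]. Qed.

Lemma fl_good : good K par fl.
Proof. split; [|split; [|split]].
  - eapply Permutation_NoDup. apply Permutation_sym, isort_perm. apply seq_NoDup.
  - intros t Ht. apply fl_in; auto.
  - intros t a Ht Ha. apply fl_in. apply fl_in in Ht. eapply (anc_lt K par Htree a t); auto.
    apply (is_anc_iff K par Htree); auto.
  - apply isort_sorted. Qed.

Lemma subtot_ext n n' t : (forall u, (u < K)%nat -> n u = n' u) -> subtot K par n t = subtot K par n' t.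
Proof. intros H. unfold subtot. apply vsumn_ext. intros d Hd. rewrite H; auto. Qed.

Lemma W_ext T n n' : (forall u, (u < K)%nat -> n u = n' u) -> W K par rho T n = W K par rho T n'.
Proof. intros H. unfold W. apply vprod_ext. intros t Ht. unfold wf. rewrite (subtot_ext n n' t H), H; auto. Qed.

Lemma c_pos : 0 < c_rho K par rho.
Proof. apply vprod_pos. intros t Ht. apply Rdiv_lt_0_compat.
  apply (one_m_sumA K par rho Htree Hrho Hsub); auto. apply (one_m_sumAbar K par rho Hsub); auto. Qed.

Lemma W_full n : W K par rho fl n = c_rho K par rho.
Proof. unfold W, c_rho. apply vprod_ext. intros t Ht. unfold wf.
  replace (memb fl t) with true; auto. symmetry; apply memb_iff, fl_in; auto. Qed.

Lemma pi_W n : pi_pf K par rho n = / c_rho K par rho * W K par rho [] n.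
Proof. unfold pi_pf, W. f_equal. apply vprod_ext. intros t Ht. unfold wf. simpl.
  rewrite (sumAT_nil K par rho). unfold Rdiv. rewrite Rminus_0_r, Rinv_1, Rmult_1_r. auto. Qed.

Lemma ovr_fl m u : (u < K)%nat -> ovr fl m (fun _ => 0%nat) u = m u.
Proof. intros Hu. unfold ovr. replace (memb fl u) with true; auto. symmetry; apply memb_iff, fl_in; auto. Qed.

Lemma bsum_fl M f : bsum K M f = isum fl M f.
Proof. rewrite bsum_isum. apply isum_perm. apply NoDup_rev, seq_NoDup.
  eapply perm_trans. apply Permutation_sym, Permutation_rev. apply Permutation_sym, isort_perm. Qed.

Lemma norm_sum : state_sum K (pi_pf K par rho) 1.
Proof. unfold state_sum. pose proof c_pos.
  destruct (main_claim K par rho Htree Hrho Hsub fl fl_good (fun _ => 0%nat)) as [H1 _].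
  rewrite W_full in H1. replace 1 with (/ c_rho K par rho * c_rho K par rho) by (field; lra).
  eapply Un_cv_ext. 2: apply (cv_scal _ _ (/ c_rho K par rho) H1).
  intros M. rewrite bsum_fl, <- isum_scal. apply isum_ext. intros m. rewrite pi_W. f_equal.
  apply W_ext. intros u Hu. rewrite ovr_fl; auto. Qed.

Lemma hf_full v : (v < K)%nat -> hf K par rho fl v (fun _ => 0%nat) = rho v * Ssub K par rho v.
Proof. intros Hv. unfold hf. replace (memb fl v) with true by (symmetry; apply memb_iff, fl_in; auto).
  f_equal. unfold hterm.
  transitivity (vsum K (fun t => (if is_anc_eq K par v t then / (1 - sumAbar K par rho t) else 0)) -
                vsum K (fun t => if is_anc K par v t then / (1 - sumA K par rho t) else 0)).
  - rewrite <- vsum_minus. apply vsum_ext. intros t Ht. replace (memb fl t) with true by (symmetry; apply memb_iff, fl_in; auto).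
    simpl. ring.
  - rewrite (reindex K par rho Htree). unfold Ssub. rewrite <- vsum_minus. apply vsum_ext. intros t Ht.
    destruct (is_anc_eq K par v t); unfold Rdiv; ring. Qed.

Lemma mean_sum v : (v < K)%nat ->
  state_sum K (fun n => INR (n v) * pi_pf K par rho n) (rho v * Ssub K par rho v).
Proof. intros Hv. unfold state_sum. pose proof c_pos.
  destruct (main_claim K par rho Htree Hrho Hsub fl fl_good (fun _ => 0%nat)) as [_ H1].
  specialize (H1 v Hv). rewrite W_full, hf_full in H1 by auto.
  replace (rho v * Ssub K par rho v) with (/ c_rho K par rho * (rho v * Ssub K par rho v * c_rho K par rho)) by (field; lra).
  eapply Un_cv_ext. 2: apply (cv_scal _ _ (/ c_rho K par rho) H1).
  intros M. rewrite bsum_fl, <- isum_scal. apply isum_ext. intros m. rewrite pi_W, ovr_fl by auto.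
  rewrite (W_ext [] m (ovr fl m (fun _ => 0%nat))). ring. intros u Hu. rewrite ovr_fl; auto. Qed.

End Final.


Open Scope R_scope.

Lemma C_up1 n s : C (S s) (S n) * (INR (S n) / INR (S s)) = C s n.
Proof. unfold C. replace (S s - S n)%nat with (s - n)%nat by lia. rewrite !fact_simpl, !mult_INR.
  pose proof (INR_fact_neq_0 n). pose proof (INR_fact_neq_0 s). pose proof (INR_fact_neq_0 (s - n)).
  assert (INR (S n) <> 0) by (rewrite S_INR; pose proof (pos_INR n); lra).
  assert (INR (S s) <> 0) by (rewrite S_INR; pose proof (pos_INR s); lra).
  field. repeat split; auto. Qed.

Lemma C_up2 n s : (n <= s)%nat -> C (S s) n * (INR (S s - n) / INR (S s)) = C s n.
Proof. intros H. unfold C. replace (S s - n)%nat with (S (s - n)) by lia. rewrite !fact_simpl, !mult_INR.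
  pose proof (INR_fact_neq_0 n). pose proof (INR_fact_neq_0 s). pose proof (INR_fact_neq_0 (s - n)).
  assert (INR (S (s - n)) <> 0) by (rewrite S_INR; pose proof (pos_INR (s - n)); lra).
  assert (INR (S s) <> 0) by (rewrite S_INR; pose proof (pos_INR s); lra).
  field. repeat split; auto. Qed.

Lemma div_INR_nonneg a b : 0 <= INR a / INR b.
Proof. destruct b. simpl. unfold Rdiv. rewrite Rinv_0, Rmult_0_r. lra.
  apply Rle_mult_inv_pos. apply pos_INR. apply lt_0_INR. lia. Qed.

Section Markov.
Context (K : nat) (par : nat -> nat) (lam r : nat -> R).
Context (Htree : is_tree K par).
Context (Hlam : forall v, (v < K)%nat -> 0 < lam v).
Context (Hr : forall v, (v < K)%nat -> 0 < r v).
Let rho := fun u => lam u / r u.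

Notation anc := (is_anc K par).
Notation ancq := (is_anc_eq K par).
Notation subtot' := (subtot K par).
Notation gamma' := (gamma K par).
Notation rate' := (rate K par lam r).
Notation pi' := (pi_pf K par rho).

Definition seqP (n m : nat -> nat) : Prop := forall u, (u < K)%nat -> n u = m u.

Lemma st_iff a b : state_eqb K a b = true <-> seqP a b.
Proof. unfold state_eqb, seqP. rewrite forallb_forall. split.
  - intros H u Hu. apply Nat.eqb_eq, H, in_seq0; auto.
  - intros H u Hu. apply Nat.eqb_eq, H, in_seq0; auto. Qed.
Lemma st_false a b u : (u < K)%nat -> a u <> b u -> state_eqb K a b = false.
Proof. intros Hu Hne. destruct (state_eqb K a b) eqn:E; auto. apply st_iff in E. exfalso; apply Hne, E; auto. Qed.

Lemma subtot_ge n v : (v < K)%nat -> (n v <= subtot' n v)%nat.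
Proof. intros Hv. unfold subtot. rewrite (vsumn_split K v _ Hv). rewrite ancq_eq, Nat.eqb_refl. simpl. lia. Qed.

Lemma subtot_ge2 n a v : (v < K)%nat -> (a < K)%nat -> anc a v = true -> (n a + n v <= subtot' n a)%nat.
Proof. intros Hv Ha Hanc. unfold subtot. rewrite (vsumn_split K a _ Ha). rewrite ancq_eq, Nat.eqb_refl. simpl.
  assert (a <> v) by (intro; subst; rewrite (anc_irr_b K par Htree) in Hanc; auto; discriminate).
  rewrite (vsumn_split K v _ Hv). destruct (Nat.eqb_spec v a); [congruence|]. rewrite ancq_eq, Hanc, orb_true_r. lia. Qed.

Lemma subtot_incr n v u : (v < K)%nat -> subtot' (incr n v) u = (subtot' n u + (if ancq u v then 1 else 0))%nat.
Proof. intros Hv. unfold subtot. rewrite (vsumn_split K v (fun d => if ancq u d then incr n v d else 0%nat) Hv).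
  rewrite (vsumn_split K v (fun d => if ancq u d then n d else 0%nat) Hv). unfold incr at 1. rewrite Nat.eqb_refl.
  assert (vsumn K (fun t => if Nat.eqb t v then 0%nat else if ancq u t then incr n v t else 0%nat) =
          vsumn K (fun t => if Nat.eqb t v then 0%nat else if ancq u t then n t else 0%nat)).
  { apply vsumn_ext. intros t Ht. unfold incr. destruct (Nat.eqb_spec t v); auto. }
  rewrite H. destruct (ancq u v); lia. Qed.

Lemma gamma_nonneg n v : 0 <= gamma' n v.
Proof. unfold gamma. destruct (Nat.eqb (n v) 0). lra. apply Rmult_le_pos. apply div_INR_nonneg.
  apply vprod_nonneg. intros a Ha. destruct (anc a v). apply div_INR_nonneg. lra. Qed.

Lemma gamma_pos n v : (v < K)%nat -> (1 <= n v)%nat -> 0 < gamma' n v.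
Proof. intros Hv Hn. unfold gamma. destruct (Nat.eqb_spec (n v) 0); [lia|]. apply Rmult_lt_0_compat.
  - pose proof (subtot_ge n v Hv). apply Rdiv_lt_0_compat; apply lt_0_INR; lia.
  - apply vprod_pos. intros a Ha. destruct (anc a v) eqn:E; [|lra].
    pose proof (subtot_ge2 n a v Hv Ha E). apply Rdiv_lt_0_compat; apply lt_0_INR; lia. Qed.

Lemma gamma_ext n n' v : (v < K)%nat -> seqP n n' -> gamma' n v = gamma' n' v.
Proof. intros Hv H. unfold gamma. rewrite H by auto.
  rewrite (subtot_ext K par n n' v H). destruct (Nat.eqb (n' v) 0); auto. f_equal. apply vprod_ext. intros a Ha.
  rewrite (subtot_ext K par n n' a H), H; auto. Qed.

Lemma pi_ext n n' : seqP n n' -> pi' n = pi' n'.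
Proof. intros H. unfold pi_pf. f_equal. apply vprod_ext. intros t Ht. rewrite (subtot_ext K par n n' t H), H; auto. Qed.

Lemma DB n v : (v < K)%nat -> pi' n * lam v = pi' (incr n v) * (r v * gamma' (incr n v) v).
Proof. intros Hv. unfold pi_pf.
  set (F := fun (m : nat -> nat) u => rho u ^ m u * C (subtot' m u) (m u)).
  set (B := fun u => if anc u v then INR (subtot' (incr n v) u - incr n v u) / INR (subtot' (incr n v) u) else 1).
  assert (Hg : gamma' (incr n v) v = vprod K (fun u => if Nat.eqb u v then INR (S (n v)) / INR (S (subtot' n v)) else B u)).
  { unfold gamma. replace (Nat.eqb (incr n v v) 0) with false.
    2: { unfold incr. rewrite Nat.eqb_refl. symmetry. apply Nat.eqb_neq. lia. }
    rewrite (vprod_split K v (fun u => if Nat.eqb u v then _ else B u) Hv). rewrite Nat.eqb_refl. f_equal.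
    - rewrite subtot_incr by auto. rewrite ancq_eq, Nat.eqb_refl. unfold incr. rewrite Nat.eqb_refl. cbn [orb]. f_equal; f_equal; lia.
    - apply vprod_ext. intros u Hu. destruct (Nat.eqb_spec u v); auto. subst. unfold B. rewrite (anc_irr_b K par Htree); auto. }
  assert (Hkey : vprod K (F (incr n v)) * gamma' (incr n v) v = rho v * vprod K (F n)).
  { rewrite Hg, <- vprod_mult. rewrite <- (lprod_single (seq 0 K) v (rho v) (seq_NoDup _ _) (proj2 (in_seq0 K v) Hv)).
    change (lprod (seq 0 K) (fun u => if Nat.eqb u v then rho v else 1) * vprod K (F n)) with
      (vprod K (fun u => if Nat.eqb u v then rho v else 1) * vprod K (F n)).
    rewrite <- vprod_mult. apply vprod_ext. intros u Hu. unfold F.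
    rewrite subtot_incr by auto. unfold incr. destruct (Nat.eqb_spec u v).
    - subst. rewrite ancq_eq, Nat.eqb_refl. cbn [orb].
      replace (subtot' n v + 1)%nat with (S (subtot' n v)) by lia. replace (n v + 1)%nat with (S (n v)) by lia.
      rewrite <- (C_up1 (n v) (subtot' n v)). change (rho v ^ S (n v)) with (rho v * rho v ^ n v). ring.
    - unfold B. rewrite ancq_eq. destruct (Nat.eqb_spec u v); [congruence|]. cbn [orb].
      destruct (anc u v) eqn:E.
      + rewrite subtot_incr by auto. rewrite ancq_eq, E, orb_true_r. unfold incr.
        destruct (Nat.eqb_spec u v); [congruence|].
        replace (subtot' n u + 1)%nat with (S (subtot' n u)) by lia.
        rewrite <- (C_up2 (n u) (subtot' n u)). ring. apply subtot_ge; auto.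
      + rewrite Nat.add_0_r. ring. }
  replace (lam v) with (r v * rho v) by (unfold rho; field; pose proof (Hr v Hv); lra).
  transitivity (/ c_rho K par rho * (r v * (rho v * vprod K (F n)))). { unfold F. ring. }
  rewrite <- Hkey. unfold F. ring. Qed.

Lemma rate_nonneg_terms n m v : (v < K)%nat ->
  0 <= (if state_eqb K m (incr n v) then lam v else 0) +
       (if (negb (Nat.eqb (n v) 0) && state_eqb K m (decr n v))%bool then r v * gamma' n v else 0).
Proof. intros Hv. pose proof (Hlam v Hv). pose proof (Hr v Hv). pose proof (gamma_nonneg n v).
  destruct (state_eqb K m (incr n v)); destruct (negb _ && _)%bool; try lra.
  pose proof (Rmult_le_pos _ _ (Rlt_le _ _ H0) H1); lra. pose proof (Rmult_le_pos _ _ (Rlt_le _ _ H0) H1); lra. Qed.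

Lemma rate_incr n v : (v < K)%nat -> rate' n (incr n v) = lam v.
Proof. intros Hv. unfold rate. rewrite (vsum_split K v _ Hv).
  replace (state_eqb K (incr n v) (incr n v)) with true by (symmetry; apply st_iff; intros u _; auto).
  replace (state_eqb K (incr n v) (decr n v)) with false.
  2: { symmetry. apply (st_false _ _ v Hv). unfold incr, decr. rewrite Nat.eqb_refl. lia. }
  rewrite andb_false_r. transitivity (lam v + vsum K (fun _ => 0)). 2: rewrite vsum_zero; ring. f_equal. ring.
  apply vsum_ext. intros w Hw. destruct (Nat.eqb_spec w v); auto.
  replace (state_eqb K (incr n v) (incr n w)) with false.
  2: { symmetry. apply (st_false _ _ v Hv). unfold incr. rewrite Nat.eqb_refl. destruct (Nat.eqb_spec v w); [congruence|]. lia. }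
  replace (state_eqb K (incr n v) (decr n w)) with false.
  2: { symmetry. apply (st_false _ _ v Hv). unfold incr, decr. rewrite Nat.eqb_refl. destruct (Nat.eqb_spec v w); [congruence|]. lia. }
  rewrite andb_false_r. ring. Qed.

Lemma rate_decr n v : (v < K)%nat -> (1 <= n v)%nat -> rate' n (decr n v) = r v * gamma' n v.
Proof. intros Hv Hn. unfold rate. rewrite (vsum_split K v _ Hv).
  replace (state_eqb K (decr n v) (incr n v)) with false.
  2: { symmetry. apply (st_false _ _ v Hv). unfold incr, decr. rewrite Nat.eqb_refl. lia. }
  replace (state_eqb K (decr n v) (decr n v)) with true by (symmetry; apply st_iff; intros u _; auto).
  replace (negb (Nat.eqb (n v) 0)) with true by (symmetry; apply negb_true_iff, Nat.eqb_neq; lia).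
  simpl. transitivity (r v * gamma' n v + vsum K (fun _ => 0)). 2: rewrite vsum_zero; ring. f_equal. ring.
  apply vsum_ext. intros w Hw. destruct (Nat.eqb_spec w v); auto.
  replace (state_eqb K (decr n v) (incr n w)) with false.
  2: { symmetry. apply (st_false _ _ w Hw). unfold incr, decr. rewrite Nat.eqb_refl. destruct (Nat.eqb_spec w v); [congruence|]. lia. }
  replace (state_eqb K (decr n v) (decr n w)) with false.
  2: { symmetry. apply (st_false _ _ v Hv). unfold decr. rewrite Nat.eqb_refl. destruct (Nat.eqb_spec v w); [congruence|]. lia. }
  rewrite andb_false_r. ring. Qed.

Lemma rate_zero n m : (forall v, (v < K)%nat -> ~ seqP m (incr n v)) ->
  (forall v, (v < K)%nat -> (1 <= n v)%nat -> ~ seqP m (decr n v)) -> rate' n m = 0.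
Proof. intros H1 H2. unfold rate. transitivity (vsum K (fun _ => 0)); [|apply vsum_zero].
  apply vsum_ext. intros v Hv.
  replace (state_eqb K m (incr n v)) with false.
  2: { symmetry. destruct (state_eqb K m (incr n v)) eqn:E; auto. apply st_iff in E. exfalso; apply (H1 v Hv E). }
  destruct (Nat.eqb_spec (n v) 0). simpl; ring.
  replace (state_eqb K m (decr n v)) with false.
  2: { symmetry. destruct (state_eqb K m (decr n v)) eqn:E; auto. apply st_iff in E. exfalso; apply (H2 v Hv); auto; lia. }
  simpl; ring. Qed.

Lemma rate_ext n n' m m' : seqP n n' -> seqP m m' -> rate' n m = rate' n' m'.
Proof. intros Hn Hm. unfold rate. apply vsum_ext. intros v Hv.
  assert (E1 : state_eqb K m (incr n v) = state_eqb K m' (incr n' v)).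
  { destruct (state_eqb K m' (incr n' v)) eqn:E.
    - apply st_iff. apply st_iff in E. intros u Hu. rewrite Hm, E by auto. unfold incr. rewrite Hn; auto.
    - destruct (state_eqb K m (incr n v)) eqn:E2; auto. apply st_iff in E2.
      rewrite <- E. symmetry. apply st_iff. intros u Hu. rewrite <- Hm, E2 by auto. unfold incr. rewrite Hn; auto. }
  assert (E2 : state_eqb K m (decr n v) = state_eqb K m' (decr n' v)).
  { destruct (state_eqb K m' (decr n' v)) eqn:E.
    - apply st_iff. apply st_iff in E. intros u Hu. rewrite Hm, E by auto. unfold decr. rewrite Hn; auto.
    - destruct (state_eqb K m (decr n v)) eqn:E3; auto. apply st_iff in E3.
      rewrite <- E. symmetry. apply st_iff. intros u Hu. rewrite <- Hm, E3 by auto. unfold decr. rewrite Hn; auto. }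
  rewrite E1, E2, Hn, (gamma_ext n n' v Hv Hn); auto. Qed.

Lemma seqP_refl n : seqP n n. Proof. intros u _; auto. Qed.

Lemma reversible_pf : reversible K par lam r pi'.
Proof. intros n m Hn Hm.
  destruct (classic (exists v, (v < K)%nat /\ seqP m (incr n v))) as [[v [Hv HA]]|nA].
  - assert (Hm1 : (1 <= m v)%nat) by (rewrite HA by auto; unfold incr; rewrite Nat.eqb_refl; lia).
    assert (HB : seqP n (decr m v)).
    { intros u Hu. unfold decr. rewrite HA by auto. unfold incr. destruct (Nat.eqb_spec u v); lia. }
    rewrite (rate_ext n n m (incr n v) (seqP_refl n) HA), rate_incr by auto.
    rewrite (rate_ext m m n (decr m v) (seqP_refl m) HB), rate_decr by auto.
    rewrite (pi_ext m (incr n v) HA), (gamma_ext m (incr n v) v Hv HA). apply DB; auto.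
  - destruct (classic (exists v, (v < K)%nat /\ (1 <= n v)%nat /\ seqP m (decr n v))) as [[v [Hv [Hn1 HB]]]|nB].
    + assert (HA : seqP n (incr m v)).
      { intros u Hu. unfold incr. rewrite HB by auto. unfold decr. destruct (Nat.eqb_spec u v); subst; lia. }
      rewrite (rate_ext m m n (incr m v) (seqP_refl m) HA), rate_incr by auto.
      rewrite (rate_ext n n m (decr n v) (seqP_refl n) HB), rate_decr by auto.
      rewrite (pi_ext n (incr m v) HA), (gamma_ext n (incr m v) v Hv HA). symmetry. apply DB; auto.
    + rewrite (rate_zero n m), (rate_zero m n). ring.
      * intros v Hv HA. apply nB. exists v. split; auto.
        assert (Hn1 : (1 <= n v)%nat) by (rewrite HA by auto; unfold incr; rewrite Nat.eqb_refl; lia).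
        split; auto. intros u Hu. unfold decr. rewrite HA by auto. unfold incr. destruct (Nat.eqb_spec u v); lia.
      * intros v Hv Hm1 HB. apply nA. exists v. split; auto.
        intros u Hu. unfold incr. rewrite HB by auto. unfold decr. destruct (Nat.eqb_spec u v); subst; lia.
      * intros v Hv HA. apply nA. exists v. split; auto.
      * intros v Hv Hn1 HB. apply nB. exists v. auto. Qed.

Lemma valid_incr n v : valid K n -> (v < K)%nat -> valid K (incr n v).
Proof. intros H Hv u Hu. unfold incr. destruct (Nat.eqb_spec u v); [lia|]. auto. Qed.
Lemma valid_decr n v : valid K n -> valid K (decr n v).
Proof. intros H u Hu. unfold decr. rewrite H by auto. destruct (u =? v)%nat; auto. Qed.

Lemma stationary_pf : stationary K par lam r pi'.
Proof. intros m Hm. unfold out_rate. rewrite <- vsum_scal. apply vsum_ext. intros v Hv.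
  rewrite (reversible_pf (incr m v) m (valid_incr m v Hm Hv) Hm), rate_incr by auto.
  destruct (Nat.eqb_spec (m v) 0).
  - unfold gamma. rewrite e. simpl. ring.
  - rewrite (reversible_pf (decr m v) m (valid_decr m v Hm) Hm), rate_decr by (auto; lia). ring. Qed.

Lemma rate_pos_decr n v : (v < K)%nat -> (1 <= n v)%nat -> rate' n (decr n v) > 0.
Proof. intros. rewrite rate_decr by auto. apply Rmult_lt_0_compat; auto. apply gamma_pos; auto. Qed.
Lemma rate_pos_incr n v : (v < K)%nat -> rate' n (incr n v) > 0.
Proof. intros. rewrite rate_incr by auto. apply Hlam; auto. Qed.

Lemma rate_decr_back n v : (v < K)%nat -> (1 <= n v)%nat -> rate' (decr n v) n > 0.
Proof. intros Hv Hn. rewrite (rate_ext (decr n v) (decr n v) n (incr (decr n v) v)).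
  apply rate_pos_incr; auto. apply seqP_refl.
  intros u Hu. unfold incr, decr. destruct (Nat.eqb_spec u v); subst; lia. Qed.

Lemma total_decr n v : (v < K)%nat -> (1 <= n v)%nat -> (vsumn K n = S (vsumn K (decr n v)))%nat.
Proof. intros Hv Hn. rewrite (vsumn_split K v n Hv), (vsumn_split K v (decr n v) Hv). unfold decr at 1. rewrite Nat.eqb_refl.
  assert (vsumn K (fun t => if Nat.eqb t v then 0%nat else decr n v t) = vsumn K (fun t => if Nat.eqb t v then 0%nat else n t)).
  { apply vsumn_ext. intros t Ht. unfold decr. destruct (Nat.eqb_spec t v); auto. }
  rewrite H. lia. Qed.

Lemma exists_pos n : (0 < vsumn K n)%nat -> exists v, (v < K)%nat /\ (1 <= n v)%nat.
Proof. intros H. apply NNPP. intros Hne.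
  assert (vsumn K n = 0%nat). { rewrite vsumn_lsumn. transitivity (lsumn (seq 0 K) (fun _ => 0%nat)).
    apply lsumn_ext. intros u Hu. apply in_seq0 in Hu. destruct (n u) eqn:E; auto. exfalso; apply Hne. exists u; split; auto; lia.
    clear. induction (seq 0 K); simpl; auto. }
  lia. Qed.

Lemma down_up : forall N n, valid K n -> vsumn K n = N ->
  clos_refl_trans _ (step K par lam r) n (fun _ => 0%nat) /\ clos_refl_trans _ (step K par lam r) (fun _ => 0%nat) n.
Proof. induction N; intros n Hn HN.
  - assert (n = fun _ => 0%nat).
    { apply functional_extensionality. intros u. destruct (Nat.lt_ge_cases u K); [|apply Hn; auto].
      destruct (n u) eqn:E; auto. exfalso. assert (Hp : (0 < vsumn K n)%nat).
      { rewrite (vsumn_split K u _ H). lia. } lia. }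
    subst. split; apply rt_refl.
  - destruct (exists_pos n ltac:(lia)) as [v [Hv Hv1]].
    assert (Hd := total_decr n v Hv Hv1).
    destruct (IHN (decr n v) (valid_decr n v Hn) ltac:(lia)) as [H1 H2]. split.
    + eapply rt_trans; [|exact H1]. apply rt_step. split; auto. split; [apply valid_decr; auto|]. apply rate_pos_decr; auto.
    + eapply rt_trans; [exact H2|]. apply rt_step. split; [apply valid_decr; auto|]. split; auto. apply rate_decr_back; auto. Qed.

Lemma irreducible_pf : irreducible K par lam r.
Proof. intros n m Hn Hm. eapply rt_trans. apply (proj1 (down_up _ n Hn eq_refl)). apply (proj2 (down_up _ m Hm eq_refl)). Qed.

End Markov.


Open Scope R_scope.

Theorem theorem2 (K : nat) (par : nat -> nat) (lam r : nat -> R) :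
  is_tree K par ->
  (forall v, (v < K)%nat -> 0 < lam v) ->
  (forall v, (v < K)%nat -> 0 < r v) ->
  (forall v, (v < K)%nat -> sumAbar K par (fun u => lam u / r u) v < 1) ->
  let rho := fun u => lam u / r u in
  let pi := pi_pf K par rho in
  irreducible K par lam r /\
  (forall n, valid K n -> 0 < pi n) /\
  state_sum K pi 1 /\
  stationary K par lam r pi /\
  reversible K par lam r pi /\
  (forall v, (v < K)%nat ->
     let EN := rho v * Ssub K par rho v in
     state_sum K (fun n => INR (n v) * pi n) EN /\
     lam v / EN = r v * / Ssub K par rho v).
Proof.
  intros Htree Hlam Hr Hsub rho pi.
  assert (Hrho : forall v, (v < K)%nat -> 0 < rho v).
  { intros v Hv. unfold rho. apply Rdiv_lt_0_compat; auto. }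
  split; [apply (irreducible_pf K par lam r Htree Hlam Hr)|].
  split.
  { intros n Hn. unfold pi, pi_pf. apply Rmult_lt_0_compat.
    - apply Rinv_0_lt_compat. apply (c_pos K par rho Htree Hrho Hsub).
    - apply vprod_pos. intros t Ht. apply Rmult_lt_0_compat. apply pow_lt; auto.
      apply C_pos. apply (subtot_ge K par); auto. }
  split; [apply (norm_sum K par rho Htree Hrho Hsub)|].
  split; [apply (stationary_pf K par lam r Htree Hr)|].
  split; [apply (reversible_pf K par lam r Htree Hr)|].
  intros v Hv EN. split.
  - apply (mean_sum K par rho Htree Hrho Hsub v Hv).
  - unfold EN, rho. pose proof (Hlam v Hv). pose proof (Hr v Hv).
    destruct (Req_dec (Ssub K par (fun u => lam u / r u) v) 0) as [E|E].
    + rewrite E, Rmult_0_r. unfold Rdiv. rewrite Rinv_0. ring.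
    + field. repeat split; lra.
Qed.
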